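(* Let $\xi$ be an American option and let $\mathcal{Z}^{\mathrm{ad}}_0\subseteq\mathbb{R}^d$ be given by the construction in the context. Then \[ \mathcal{Z}^{\mathrm{ad}}_0=\{x\in\mathbb{R}^d:\exists Y\in\Phi^{\mathrm{ag}}(\xi),\ x=Y_0\}, \] and for each $j=1,\ldots,d$ the ask price satisfies $\pi^{\mathrm{ag}}_j(\xi)=\min\{x\in\mathbb{R}: xe^j\in\mathcal{Z}^{\mathrm{ad}}_0\}$ (the minimum being attained). Moreover, there exists $Y\in\Phi^{\mathrm{ag}}(\xi)$ with $Y_0=\pi^{\mathrm{ag}}_j(\xi)e^j$.
   Context: Finite filtered probability space $(\Omega,\mathcal{F},\mathbb{P};(\mathcal{F}_t)_{t=0}^T)$, $\mathcal{F}_0$ trivial, $\mathcal{F}_T=2^\Omega$, $\mathbb{P}(\{\omega\})>0$. $\Omega_t$: atoms (nodes) of $\mathcal{F}_t$; for $\mu\in\Omega_t$, $t<T$, $\mathrm{succ}\,\mu=\{\nu\in\Omega_{t+1}:\nu\subseteq\mu\}$. $\mathcal{L}_t$: $\mathcal{F}_t$-measurable $\mathbb{R}^d$-valued random variables (functions on $\Omega_t$). $d$ assets with $\mathcal{F}_t$-measurable exchange rates $\pi^{jk}_t>0$, $\pi^{jj}_t=1$. For $\mu\in\Omega_t$, $\mathcal{K}^\mu_t$ is the convex cone generated by $e^1,\ldots,e^d$ and $\pi^{jk}_t(\mu)e^j-e^k$, and $\mathcal{K}_t=\{x\in\mathcal{L}_t:x(\mu)\in\mathcal{K}^\mu_t\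 \forall\mu\}$. Deferred solvency cone $\mathcal{Q}_t$: set of $z\in\mathcal{L}_t$ for which there are $y_{t+1},\ldots,y_{T+1}$, $y_s\in\mathcal{L}_{s-1}$, $y_{T+1}=0$, with $z-y_{t+1}\in\mathcal{K}_t$, $y_s-y_{s+1}\in\mathcal{K}_s$ ($s=t+1,\ldots,T$); $\mathcal{Q}^\mu_t=\{z(\mu):z\in\mathcal{Q}_t\}$. Trading strategies $\Phi$: $y=(y_t)_{t=0}^{T+1}$, $y_0\in\mathbb{R}^d$, $y_t\in\mathcal{L}_{t-1}$, $y_{T+1}=0$. Mixed stopping times $\mathcal{X}$: adapted $[0,1]$-valued $\chi$ with $\sum_t\chi_t=1$. American option: adapted $\mathbb{R}^d$-valued $\xi=(\xi_t)_{t=0}^T$. $\Phi^{\mathrm{ag}}(\xi)$: maps $Y:\mathcal{X}\to\Phi$ with $Y^\chi_t-\chi_t\xi_t-Y^\chi_{t+1}\in\mathcal{K}_t$ for all $\chi$, $t=0,\ldots,T$, and non-anticipating: $\chi_s(\omega)=\chi'_s(\omega)$ for $s<t$ implies $Y^\chi_t(\omega)=Y^{\chi'}_t(\omega)$; $Y_0$ is the common value of $Y^\chi_0$. Ask price: $\pi^{\mathrm{ag}}_j(\xi)=\inf\{x\in\mathbb{R}:\exists Y\in\Phi^{\mathrm{ag}}(\xi),\ xe^j=Y_0\}$. Construction (node by node): for $t=0,\ldots,T$ and $\mu\in\Omega_t$, $\mathcal{U}^{\mathrm{ad}\mu}_t=\xi_t(\mu)+\mathcal{Q}^\mu_t$;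 for $\mu\in\Omega_T$, $\mathcal{Z}^{\mathrm{ad}\mu}_T=\mathcal{V}^{\mathrm{ad}\mu}_T=\mathcal{W}^{\mathrm{ad}\mu}_T=\mathcal{U}^{\mathrm{ad}\mu}_T$; backwards for $t=T-1,\ldots,0$ and $\mu\in\Omega_t$: $\mathcal{W}^{\mathrm{ad}\mu}_t=\bigcap_{\nu\in\mathrm{succ}\,\mu}\mathcal{Z}^{\mathrm{ad}\nu}_{t+1}$, $\mathcal{V}^{\mathrm{ad}\mu}_t=\mathcal{W}^{\mathrm{ad}\mu}_t+\mathcal{Q}^\mu_t$, $\mathcal{Z}^{\mathrm{ad}\mu}_t=\mathcal{U}^{\mathrm{ad}\mu}_t\cap\mathcal{V}^{\mathrm{ad}\mu}_t$. $\mathcal{Z}^{\mathrm{ad}}_0$ denotes the set at the single node of $\Omega_0$. Standing assumption: no arbitrage (no $y\in\Phi$ with $y_0=0$, $y_t-y_{t+1}\in\mathcal{K}_t$ for $t<T$ and $y_T-x\in\mathcal{K}_T$ for some nonzero componentwise non-negative $x\in\mathcal{L}_T$). *)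

(* Defs.v *)
From HB Require Import structures.
From mathcomp Require Import all_boot all_order all_algebra.
From mathcomp Require Import boolp classical_sets reals.
Set Implicit Arguments. Unset Strict Implicit. Unset Printing Implicit Defensive.
Import Order.TTheory GRing.Theory Num.Theory.
Local Open Scope ring_scope.

Section Model.
Variables (R : realType) (d : nat) (Omega : finType) (T : nat).
(* F t : the partition of Omega into the atoms (nodes) of F_t *)
Variable F : nat -> {set {set Omega}}.
(* pi t w j k = pi^{jk}_t(w) *)
Variable pi : nat -> Omega -> 'I_d -> 'I_d -> R.

Notation vec := 'rV[R]_d.

Definition e (j : 'I_d) : vec := delta_mx 0 j.

Definition filtration : Prop :=
  (forall t, (t <= T)%N -> finset.partition (F t) [set: Omega]) /\
  F 0%N = [set [set: Omega]] /\
  F T = [set [set w] | w : Omega] /\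
  (forall t, (t < T)%N -> forall B, B \in F t.+1 -> exists2 A, A \in F t & B \subset A).

(* F_t-measurability: constant on the atoms of F_t *)
Definition meas (V : Type) (t : nat) (x : Omega -> V) : Prop :=
  forall A, A \in F t -> forall w w', w \in A -> w' \in A -> x w = x w'.

Local Open Scope classical_set_scope.

Definition sameatom (t : nat) (w w' : Omega) : Prop :=
  exists2 A, A \in F t & (w \in A) && (w' \in A).

Definition exchange_rates : Prop :=
  forall t, (t <= T)%N ->
    meas t (pi t) /\ (forall w j k, 0 < pi t w j k) /\ (forall w j, pi t w j j = 1).

Definition Kcone (t : nat) (w : Omega) (x : vec) : Prop :=
  exists (a : 'I_d -> R) (b : 'I_d -> 'I_d -> R),
    (forall k, 0 <= a k) /\ (forall j k, 0 <= b j k) /\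
    x = \sum_(k < d) a k *: e k
        + \sum_(j < d) \sum_(k < d) b j k *: (pi t w j k *: e j - e k).

Definition inK (t : nat) (x : Omega -> vec) : Prop :=
  meas t x /\ forall w, Kcone t w (x w).

(* trading strategies Phi: y_0 in L_0 = R^d, y_t in L_{t-1}, y_t = 0 for t > T *)
Definition strategy (y : nat -> Omega -> vec) : Prop :=
  (forall t, (t <= T.+1)%N -> meas t.-1 (y t)) /\
  (forall t w, (T < t)%N -> y t w = 0).

Definition inQ (t : nat) (z : Omega -> vec) : Prop :=
  meas t z /\
  exists y : nat -> Omega -> vec,
    (forall s, (t < s <= T.+1)%N -> meas s.-1 (y s)) /\
    (forall w, y T.+1 w = 0) /\
    inK t (fun w => z w - y t.+1 w) /\
    (forall s, (t < s <= T)%N -> inK s (fun w => y s w - y s.+1 w)).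

(* Q^mu_t, mu the F_t-atom containing w *)
Definition Qnode (t : nat) (w : Omega) : set vec :=
  [set v | exists z, inQ t z /\ z w = v].

Definition no_arbitrage : Prop :=
  ~ exists y : nat -> Omega -> vec,
      strategy y /\ (forall w, y 0%N w = 0) /\
      (forall t, (t < T)%N -> inK t (fun w => y t w - y t.+1 w)) /\
      exists x : Omega -> vec,
        meas T x /\ (forall w k, 0 <= x w 0 k) /\ (exists w, x w != 0) /\
        inK T (fun w => y T w - x w).

Definition mixed (chi : nat -> Omega -> R) : Prop :=
  (forall t, (t <= T)%N -> meas t (chi t)) /\
  (forall t w, 0 <= chi t w <= 1) /\
  (forall w, \sum_(t < T.+1) chi t w = 1) /\
  (forall t w, (T < t)%N -> chi t w = 0).

Variable xi : nat -> Omega -> vec.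

Definition adapted_option : Prop := forall t, (t <= T)%N -> meas t (xi t).

Definition PhiAg (Y : (nat -> Omega -> R) -> nat -> Omega -> vec) : Prop :=
  (forall chi, mixed chi ->
     strategy (Y chi) /\
     forall t, (t <= T)%N ->
       inK t (fun w => Y chi t w - chi t w *: xi t w - Y chi t.+1 w)) /\
  (forall chi chi', mixed chi -> mixed chi' ->
     forall t w, (forall s, (s < t)%N -> chi s w = chi' s w) ->
       Y chi t w = Y chi' t w).

(* Y_0 = x (Y_0 is the common value of all Y^chi_0) *)
Definition Yzero (Y : (nat -> Omega -> R) -> nat -> Omega -> vec) (x : vec) : Prop :=
  forall chi, mixed chi -> forall w, Y chi 0%N w = x.

Definition askprice (j : 'I_d) : R :=
  inf [set x : R | exists Y, PhiAg Y /\ Yzero Y (x *: e j)].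

Definition Uad (t : nat) (w : Omega) : set vec :=
  [set u | exists2 v, Qnode t w v & u = xi t w + v].

Fixpoint Zrec (n : nat) : Omega -> set vec :=
  match n with
  | 0%N => Uad T
  | n'.+1 => fun w =>
      let t := (T - n'.+1)%N in
      let W := [set v | forall w', sameatom t w w' -> Zrec n' w' v] in
      Uad t w `&` [set a + b | a in W & b in Qnode t w]
  end.

(* Z^{ad mu}_t for the atom mu of F_t containing w *)
Definition Zad (t : nat) (w : Omega) : set vec := Zrec (T - t) w.

(* Z^ad_0 (F_0 trivial, so Zad 0 w does not depend on w) *)
Definition Zad0 : set vec := [set v | forall w, Zad 0%N w v].

End Model.

Arguments e {R d} j.

(* Main.v *)
Require Import Defs.
From HB Require Import structures.
From mathcomp Require Import all_boot all_order all_algebra.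
From mathcomp Require Import boolp classical_sets reals.
From mathcomp Require Import ring lra zify.
Import Order.TTheory GRing.Theory Num.Theory.

Module MA.
Set Implicit Arguments. Unset Strict Implicit. Unset Printing Implicit Defensive.
Local Open Scope classical_set_scope.
Local Open Scope ring_scope.

Section Filt.
Variables (Omega : finType) (T : nat) (F : nat -> {set {set Omega}}).
Hypothesis hF : filtration T F.

Lemma sa_refl t w : (t <= T)%N -> sameatom F t w w.
Proof.
move=> tT; have /andP[/eqP cov _] := hF.1 t tT.
have : w \in finset.cover (F t) by rewrite cov inE.
by case/finset.bigcupP=> A AF wA; exists A => //; rewrite wA.
Qed.

Lemma sa_sym t w w' : sameatom F t w w' -> sameatom F t w' w.
Proof. by case=> A AF /andP[h1 h2]; exists A => //; rewrite h1 h2. Qed.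

Lemma sa_trans t w1 w2 w3 : (t <= T)%N ->
  sameatom F t w1 w2 -> sameatom F t w2 w3 -> sameatom F t w1 w3.
Proof.
move=> tT [A AF /andP[a1 a2]] [B BF /andP[b2 b3]].
have /and3P[_ triv _] := hF.1 t tT.
have AB : A = B.
  apply/eqP; apply/negPn/negP => nAB.
  move/finset.trivIsetP: triv => triv; have := triv A B AF BF nAB.
  by move/disjointFr => /(_ _ a2); rewrite b2.
by subst B; exists A => //; rewrite a1 b3.
Qed.

Lemma sa_refine s t w w' : (s <= t)%N -> (t <= T)%N ->
  sameatom F t w w' -> sameatom F s w w'.
Proof.
move=> st tT; elim: t st tT => [|t IH] st tT.
  by rewrite leqn0 in st; move/eqP: st => ->.
rewrite leq_eqVlt in st; case/orP: st => [/eqP -> //|st] h.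
apply: IH => //; first exact: ltnW.
case: h => A AF /andP[a1 a2].
have [B BF AB] := hF.2.2.2 t tT A AF.
by exists B => //; rewrite (fintype.subsetP AB _ a1) (fintype.subsetP AB _ a2).
Qed.

Lemma sa0 w w' : sameatom F 0 w w'.
Proof. by exists [set: Omega]%SET; [rewrite hF.2.1 inE | rewrite !inE]. Qed.

Lemma measP (V : Type) t (x : Omega -> V) :
  meas F t x <-> forall w w', sameatom F t w w' -> x w = x w'.
Proof.
split=> [h w w' [A AF /andP[a1 a2]]|h A AF w w' a1 a2]; first exact: h AF _ _ a1 a2.
by apply: h; exists A => //; rewrite a1 a2.
Qed.

Lemma meas_mono (V : Type) s t (x : Omega -> V) : (s <= t)%N -> (t <= T)%N ->
  meas F s x -> meas F t x.
Proof.
move=> st tT /measP h; apply/measP => w w' hw; apply: h.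
exact: sa_refine hw.
Qed.

Lemma meas_const (V : Type) t (c : V) : meas F t (fun _ => c).
Proof. by []. Qed.

Lemma meas1 (U V : Type) t (f : U -> V) (x : Omega -> U) :
  meas F t x -> meas F t (fun w => f (x w)).
Proof. by move=> h A AF w w' a1 a2; rewrite (h A AF w w' a1 a2). Qed.

Lemma meas2 (U1 U2 V : Type) t (f : U1 -> U2 -> V) (x : Omega -> U1) (y : Omega -> U2) :
  meas F t x -> meas F t y -> meas F t (fun w => f (x w) (y w)).
Proof.
by move=> h1 h2 A AF w w' a1 a2; rewrite (h1 A AF w w' a1 a2) (h2 A AF w w' a1 a2).
Qed.

Lemma meas_ext (V : Type) t (x y : Omega -> V) :
  (forall w, x w = y w) -> meas F t x -> meas F t y.
Proof. by move=> e h A AF w w' a1 a2; rewrite -!e (h A AF w w' a1 a2). Qed.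

Lemma meas_sum (R : realType) d t (I : finType) (f : I -> Omega -> 'rV[R]_d) :
  (forall i, meas F t (f i)) -> meas F t (fun w => \sum_i f i w).
Proof.
by move=> h A AF w w' a1 a2; apply: eq_bigr => i _; rewrite (h i A AF w w' a1 a2).
Qed.

Lemma meas_sumR (R : realType) t (n : nat) (f : nat -> Omega -> R) :
  (forall i, (i < n)%N -> meas F t (f i)) -> meas F t (fun w => \sum_(i < n) f i w).
Proof.
by move=> h A AF w w' a1 a2; apply: eq_bigr => i _; rewrite (h i (ltn_ord i) A AF w w' a1 a2).
Qed.

End Filt.

Section Cone.
Variables (R : realType) (d : nat) (Omega : finType) (T : nat)
  (F : nat -> {set {set Omega}}) (pi : nat -> Omega -> 'I_d -> 'I_d -> R).
Hypothesis hF : filtration T F.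
Hypothesis hpi : exchange_rates T F pi.

Lemma Kcone0 t w : Kcone pi t w 0.
Proof.
exists (fun=> 0), (fun _ _ => 0); do 2!split=> //.
by rewrite !big1 ?addr0 // => i _; rewrite ?big1 // => *; rewrite scale0r.
Qed.

Lemma KconeD t w x y : Kcone pi t w x -> Kcone pi t w y -> Kcone pi t w (x + y).
Proof.
case=> a [b [ha [hb ->]]] [a' [b' [ha' [hb' ->]]]].
exists (fun k => a k + a' k), (fun j k => b j k + b' j k); split.
  by move=> k; rewrite addr_ge0.
split; first by move=> j k; rewrite addr_ge0.
rewrite addrACA; congr (_ + _).
  by rewrite -big_split; apply: eq_bigr => k _; rewrite scalerDl.
rewrite -big_split; apply: eq_bigr => j _; rewrite -big_split.
by apply: eq_bigr => k _; rewrite scalerDl.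
Qed.

Lemma KconeZ t w c x : 0 <= c -> Kcone pi t w x -> Kcone pi t w (c *: x).
Proof.
move=> c0 [a [b [ha [hb ->]]]].
exists (fun k => c * a k), (fun j k => c * b j k); split.
  by move=> k; rewrite mulr_ge0.
split; first by move=> j k; rewrite mulr_ge0.
rewrite scalerDr !scaler_sumr; congr (_ + _).
  by apply: eq_bigr => k _; rewrite scalerA.
apply: eq_bigr => j _; rewrite scaler_sumr.
by apply: eq_bigr => k _; rewrite scalerA.
Qed.

Lemma Kcone_sum t w (n : nat) (f : nat -> 'rV[R]_d) :
  (forall i, (i < n)%N -> Kcone pi t w (f i)) -> Kcone pi t w (\sum_(i < n) f i).
Proof.
elim: n => [|n IH] h; first by rewrite big_ord0; exact: Kcone0.
rewrite big_ord_recr /=; apply: KconeD; last exact: h.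
by apply: IH => i ilt; apply: h; rewrite ltnS ltnW.
Qed.

Lemma Kcone_sa t w w' x : (t <= T)%N -> sameatom F t w w' ->
  Kcone pi t w x -> Kcone pi t w' x.
Proof.
move=> tT hs; have := (hpi tT).1 => /measP; move=> /(_ w w' hs) e.
by rewrite /Kcone e.
Qed.

Lemma inK_ext t (x y : Omega -> 'rV[R]_d) :
  (forall w, x w = y w) -> inK F pi t x -> inK F pi t y.
Proof.
move=> e [hm hk]; split; first exact: meas_ext hm.
by move=> w; rewrite -e.
Qed.

Lemma inKD t (x y : Omega -> 'rV[R]_d) :
  inK F pi t x -> inK F pi t y -> inK F pi t (fun w => x w + y w).
Proof.
case=> m1 k1 [m2 k2]; split; first exact: meas2.
by move=> w; apply: KconeD.
Qed.

Lemma inKZ t (c : Omega -> R) (x : Omega -> 'rV[R]_d) :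
  meas F t c -> (forall w, 0 <= c w) ->
  inK F pi t x -> inK F pi t (fun w => c w *: x w).
Proof.
move=> mc c0 [m1 k1]; split; first exact: meas2.
by move=> w; apply: KconeZ.
Qed.

Lemma inK0 t : inK F pi t (fun=> 0).
Proof. by split=> // w; exact: Kcone0. Qed.

Lemma inK_sum t (n : nat) (f : nat -> Omega -> 'rV[R]_d) :
  (forall i, (i < n)%N -> inK F pi t (f i)) -> inK F pi t (fun w => \sum_(i < n) f i w).
Proof.
elim: n => [|n IH] h.
  by apply: inK_ext (inK0 t) => w; rewrite big_ord0.
apply: inK_ext; first by move=> w; rewrite big_ord_recr /=; reflexivity.
apply: inKD; last exact: h.
by apply: IH => i ilt; apply: h; rewrite ltnS ltnW.
Qed.

End Cone.

End MA.
Import MA.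

Module MD.
Set Implicit Arguments. Unset Strict Implicit. Unset Printing Implicit Defensive.
Local Open Scope ring_scope.

Section Poly.
Variable R : realType.

Definition aff (J : finType) (f : (J -> R) -> R) :=
  exists (c : J -> R) (b : R), forall z, f z = \sum_j c j * z j + b.

Definition polyh (J : finType) (P : (J -> R) -> Prop) :=
  exists (I : finType) (g : I -> (J -> R) -> R),
    (forall i, aff (g i)) /\ forall z, P z <-> forall i, 0 <= g i z.

Definition jn (J K : finType) (x : J -> R) (u : K -> R) : J + K -> R :=
  fun s => match s with inl j => x j | inr k => u k end.

Definition cpoly (J : finType) (S : (J -> R) -> Prop) :=
  exists (K : finType) (P : (J + K -> R) -> Prop),
    polyh P /\ forall x, S x <-> exists u, P (jn x u).

Section AffLemmas.
Variable J : finType.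

Lemma aff_const (c : R) : aff (fun _ : J -> R => c).
Proof. by exists (fun=> 0), c => z; rewrite big1 ?add0r // => j _; rewrite mul0r. Qed.

Lemma aff_coord (j : J) : aff (fun z : J -> R => z j).
Proof.
exists (fun i => (i == j)%:R), 0 => z; rewrite addr0 (bigD1 j) //= eqxx mul1r.
by rewrite big1 ?addr0 // => i /negbTE ->; rewrite mul0r.
Qed.

Lemma affD f g : aff f -> aff g -> aff (fun z : J -> R => f z + g z).
Proof.
case=> c [b hf] [c' [b' hg]]; exists (fun j => c j + c' j), (b + b') => z.
rewrite hf hg addrACA -big_split; congr (_ + _); apply: eq_bigr => j _.
by rewrite mulrDl.
Qed.

Lemma affZ a f : aff f -> aff (fun z : J -> R => a * f z).
Proof.
case=> c [b hf]; exists (fun j => a * c j), (a * b) => z.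
by rewrite hf mulrDr mulr_sumr; congr (_ + _); apply: eq_bigr => j _; rewrite mulrA.
Qed.

Lemma affN f : aff f -> aff (fun z : J -> R => - f z).
Proof.
move=> h; have := affZ (-1) h; case=> c [b e]; exists c, b => z.
by rewrite -e mulN1r.
Qed.

Lemma affB f g : aff f -> aff g -> aff (fun z : J -> R => f z - g z).
Proof. by move=> hf hg; apply: affD => //; apply: affN. Qed.

Lemma aff_ext (f g : (J -> R) -> R) : (forall z, f z = g z) -> aff f -> aff g.
Proof. by move=> e [c [b h]]; exists c, b => z; rewrite -e. Qed.

Lemma aff_sum (I : finType) (f : I -> (J -> R) -> R) :
  (forall i, aff (f i)) -> aff (fun z : J -> R => \sum_i f i z).
Proof.
move=> h.
suff : forall s : seq I, aff (fun z : J -> R => \sum_(i <- s) f i z).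
  by move/(_ (enum I)); apply: aff_ext => z; rewrite big_enum.
elim=> [|i s IH].
  by apply: aff_ext (aff_const 0) => z; rewrite big_nil.
by apply: aff_ext (affD (h i) IH) => z; rewrite big_cons.
Qed.

End AffLemmas.

Lemma aff_comp (J J' : finType) (f : (J -> R) -> R) (h : (J' -> R) -> J -> R) :
  aff f -> (forall j, aff (fun z => h z j)) -> aff (fun z => f (h z)).
Proof.
case=> c [b hf] hh.
apply: aff_ext; first by move=> z; rewrite hf; reflexivity.
apply: affD; last exact: aff_const.
by apply: aff_sum => j; apply: affZ.
Qed.

Lemma aff_inl (J K : finType) (f : (J -> R) -> R) :
  aff f -> aff (fun z : J + K -> R => f (fun j => z (inl j))).
Proof. by move=> h; apply: aff_comp h _ => j; apply: aff_coord. Qed.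

Section PolyhLemmas.
Variable J : finType.

Lemma polyh_ext (P Q : (J -> R) -> Prop) :
  (forall z, P z <-> Q z) -> polyh P -> polyh Q.
Proof.
move=> e [I [g [ha hP]]]; exists I, g; split=> // z.
by rewrite -e.
Qed.

Lemma polyh_ineqs (I : finType) (g : I -> (J -> R) -> R) :
  (forall i, aff (g i)) -> polyh (fun z => forall i, 0 <= g i z).
Proof. by move=> h; exists I, g. Qed.

Lemma polyh_true : polyh (fun _ : J -> R => True).
Proof.
exists void, (fun _ _ => 0); split; first by case.
by move=> z; split=> // _; case.
Qed.

Lemma polyh_and (P Q : (J -> R) -> Prop) :
  polyh P -> polyh Q -> polyh (fun z => P z /\ Q z).
Proof.
move=> [I [g [ha hP]]] [I' [g' [ha' hQ]]].
exists (I + I')%type, (fun s => match s with inl i => g i | inr i => g' i end).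
split; first by case.
move=> z; rewrite hP hQ; split.
  by case=> h1 h2 [i|i].
by move=> h; split=> i; [apply: (h (inl i)) | apply: (h (inr i))].
Qed.

Lemma polyh_eq (f : (J -> R) -> R) : aff f -> polyh (fun z => f z = 0).
Proof.
move=> hf; exists bool, (fun b z => if b then f z else - f z); split.
  by case=> //; apply: affN.
move=> z; split; first by move=> -> [|]; rewrite ?oppr0.
move=> h; apply/eqP; rewrite eq_le; have := h true; have := h false.
by rewrite oppr_ge0 => -> ->.
Qed.

End PolyhLemmas.

Lemma polyh_comp (J J' : finType) (P : (J -> R) -> Prop) (h : (J' -> R) -> J -> R) :
  polyh P -> (forall j, aff (fun z => h z j)) -> polyh (fun z => P (h z)).
Proof.
move=> [I [g [ha hP]]] hh; exists I, (fun i z => g i (h z)); split.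
  by move=> i; apply: aff_comp.
by move=> z; rewrite hP.
Qed.

Section CpolyLemmas.
Variable J : finType.

Lemma cpoly_ext (S1 S2 : (J -> R) -> Prop) :
  (forall z, S1 z <-> S2 z) -> cpoly S1 -> cpoly S2.
Proof. by move=> e [K [P [hP hS]]]; exists K, P; split=> // x; rewrite -e. Qed.

Lemma cpoly_of_polyh (S : (J -> R) -> Prop) : polyh S -> cpoly S.
Proof.
move=> h; exists void, (fun z => S (fun j => z (inl j))); split.
  by apply: polyh_comp h _ => j; apply: aff_coord.
by move=> x; split=> [Sx|[u //]]; exists (fun v : void => match v with end).
Qed.

Lemma cpoly_true : cpoly (fun _ : J -> R => True).
Proof. exact/cpoly_of_polyh/polyh_true. Qed.

Lemma cpoly_and (S1 S2 : (J -> R) -> Prop) :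
  cpoly S1 -> cpoly S2 -> cpoly (fun z => S1 z /\ S2 z).
Proof.
move=> [K1 [P1 [h1 e1]]] [K2 [P2 [h2 e2]]].
exists (K1 + K2)%type,
  (fun z => P1 (jn (fun j => z (inl j)) (fun k => z (inr (inl k)))) /\
            P2 (jn (fun j => z (inl j)) (fun k => z (inr (inr k))))).
split.
  apply: polyh_and.
    by apply: polyh_comp h1 _ => -[j|k]; apply: aff_coord.
  by apply: polyh_comp h2 _ => -[j|k]; apply: aff_coord.
move=> x; rewrite e1 e2; split.
  by case=> -[u1 p1] [u2 p2]; exists (jn u1 u2).
by case=> u [p1 p2]; split; [exists (fun k => u (inl k)) | exists (fun k => u (inr k))].
Qed.

Lemma cpoly_bigI (I : finType) (S : I -> (J -> R) -> Prop) :
  (forall i, cpoly (S i)) -> cpoly (fun z => forall i, S i z).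
Proof.
move=> h.
suff : forall s : seq I, cpoly (fun z => forall i, i \in s -> S i z).
  by move/(_ (enum I)); apply: cpoly_ext => z; split=> H i //; apply: H; rewrite mem_enum.
elim=> [|i s IH].
  by apply: cpoly_ext cpoly_true => z; split=> // _ i; rewrite in_nil.
apply: cpoly_ext (cpoly_and (h i) IH) => z; split.
  by case=> h1 h2 i'; rewrite in_cons => /orP[/eqP ->//|]; apply: h2.
move=> H; split; first by apply: H; rewrite in_cons eqxx.
by move=> i' hi'; apply: H; rewrite in_cons hi' orbT.
Qed.

End CpolyLemmas.

Lemma cpoly_proj (J J' : finType) (S : (J + J' -> R) -> Prop) :
  cpoly S -> cpoly (fun x : J -> R => exists y, S (jn x y)).
Proof.
move=> [K [P [hP e]]].
exists (J' + K)%type,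
  (fun z => P (jn (jn (fun j => z (inl j)) (fun j' => z (inr (inl j')))) (fun k => z (inr (inr k))))).
split; first by apply: polyh_comp hP _ => -[[j|j']|k]; apply: aff_coord.
move=> x; split.
  by case=> y /e [u pu]; exists (jn y u).
by case=> u pu; exists (fun j' => u (inl j')); apply/e; exists (fun k => u (inr k)).
Qed.

Lemma cpoly_comp (J J' : finType) (S : (J -> R) -> Prop) (h : (J' -> R) -> J -> R) :
  cpoly S -> (forall j, aff (fun z => h z j)) -> cpoly (fun z => S (h z)).
Proof.
move=> [K [P [hP e]]] hh.
exists K, (fun z => P (jn (h (fun j' => z (inl j'))) (fun k => z (inr k)))).
split; last by move=> x; rewrite e.
apply: polyh_comp hP _ => -[j|k]; last exact: aff_coord.
by apply: (@aff_inl _ K (fun z => h z j)).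
Qed.

(* ---------- Fourier-Motzkin ---------- *)

Definition ext (J : finType) (m : nat) (z : J + 'I_m -> R) (y : R) : J + 'I_m.+1 -> R :=
  fun s => match s with
           | inl j => z (inl j)
           | inr i => match unlift ord_max i with Some i' => z (inr i') | None => y end
           end.

Lemma ext_diff (J : finType) m (z : J + 'I_m -> R) y s :
  ext z y s - ext z 0 s = (s == inr ord_max)%:R * y.
Proof.
case: s => [j|i] /=; first by rewrite subrr mul0r.
case: unliftP => [i' ->|->]; last by rewrite eqxx mul1r subr0.
have -> : (inr (lift ord_max i') == inr ord_max :> J + 'I_m.+1) = false.
  by apply/negbTE; rewrite /eq_op /= eq_sym neq_lift.
by rewrite subrr mul0r.
Qed.

Lemma aff_ext0 (J : finType) m (g : (J + 'I_m.+1 -> R) -> R) :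
  aff g -> aff (fun z : J + 'I_m -> R => g (ext z 0)).
Proof.
move=> hg; apply: aff_comp hg _ => -[j|i] /=; first exact: aff_coord.
by case: (unlift ord_max i) => [i'|]; [apply: aff_coord | apply: aff_const].
Qed.

Lemma aff_decomp (J : finType) m (g : (J + 'I_m.+1 -> R) -> R) :
  aff g -> forall z y, g (ext z y) = g (ext z 0) + (g (ext (fun=> 0) 1) - g (ext (fun=> 0) 0)) * y.
Proof.
case=> c [b hg].
have key : forall z y, g (ext z y) - g (ext z 0) = c (inr ord_max) * y.
  move=> z y; rewrite !hg opprD addrACA subrr addr0 -sumrB.
  rewrite (eq_bigr (fun s => (s == inr ord_max)%:R * (c s * y))); last first.
    by move=> s _; rewrite -mulrBr ext_diff mulrCA.
  rewrite (bigD1 (inr ord_max)) // eqxx mul1r big1 /=; first by rewrite addr0.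
  by move=> s /negbTE ->; rewrite mul0r.
move=> z y; have := key z y; have := key (fun=> 0) 1; rewrite mulr1 => ->.
by move/eqP; rewrite subr_eq addrC => /eqP.
Qed.

Lemma FM1 (J : finType) m (P : (J + 'I_m.+1 -> R) -> Prop) :
  polyh P -> polyh (fun z : J + 'I_m -> R => exists y, P (ext z y)).
Proof.
move=> [I [g [ha hP]]].
pose c i := g i (ext (fun=> 0) 1) - g i (ext (fun=> 0) 0).
pose g0 i (z : J + 'I_m -> R) := g i (ext z 0).
have dec : forall i z y, g i (ext z y) = g0 i z + c i * y.
  by move=> i z y; rewrite (aff_decomp (ha i)).
have a0 : forall i, aff (g0 i) by move=> i; apply: aff_ext0.
exists (I + I * I)%type, (fun s z => match s with
   | inl i => if c i == 0 then g0 i z else 0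
   | inr (p, q) => if (0 < c p) && (c q < 0) then (- c q) * g0 p z + c p * g0 q z else 0
   end).
split.
  case=> [i|[p q]]; first by case: (c i == 0); [apply: a0 | apply: aff_const].
  case: ((0 < c p) && (c q < 0)); last exact: aff_const.
  by apply: affD; apply: affZ.
move=> z; split.
  case=> y /hP H [i|[p q]].
    case: ifP => // /eqP c0; have := H i; by rewrite dec c0 mul0r addr0.
  case: ifP => // /andP[cp cq].
  have hp := H p; have hq := H q; rewrite dec in hp; rewrite dec in hq.
  have -> : - c q * g0 p z + c p * g0 q z = - c q * (g0 p z + c p * y) + c p * (g0 q z + c q * y).
    by ring.
  by apply: addr_ge0; apply: mulr_ge0 => //; rewrite ?oppr_ge0 ltW.
move=> H.
pose L p := - g0 p z / c p.
pose U q := - g0 q z / c q.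
have pair : forall p q, 0 < c p -> c q < 0 -> L p <= U q.
  move=> p q cp cq; have := H (inr (p, q)); rewrite cp cq /=.
  move=> h; rewrite /L /U ler_pdivrMr // mulrAC ler_ndivlMr // -subr_ge0.
  suff -> : - g0 p z * c q - - g0 q z * c p = - c q * g0 p z + c p * g0 q z by [].
  by ring.
have lowok : forall i y, 0 < c i -> L i <= y -> 0 <= g0 i z + c i * y.
  by move=> i y ci; rewrite /L ler_pdivrMr // => h; rewrite -subr_ge0 in h;
     rewrite addrC (le_trans h) // opprK mulrC addrC.
have upok : forall i y, c i < 0 -> y <= U i -> 0 <= g0 i z + c i * y.
  by move=> i y ci; rewrite /U ler_ndivlMr // => h; rewrite -subr_ge0 in h;
     rewrite addrC (le_trans h) // opprK mulrC addrC.
have zerok : forall i y, c i = 0 -> 0 <= g0 i z + c i * y.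
  by move=> i y ci; have := H (inl i); rewrite ci eqxx mul0r addr0.
have tri : forall i y, (0 < c i -> L i <= y) -> (c i < 0 -> y <= U i) ->
    0 <= g0 i z + c i * y.
  move=> i y h1 h2; case: (ltgtP (c i) 0) => ci.
  - exact: upok (h2 ci).
  - exact: lowok (h1 ci).
  - exact: zerok.
case: (pickP (fun p => 0 < c p)) => [p0 pp0|nopos].
  have [ps' cps' hmax] : exists2 p', 0 < c p' & forall i, 0 < c i -> L i <= L p'.
    by case: (@arg_maxP _ _ _ p0 (fun p => 0 < c p) L pp0) => p' cp' hm; exists p'.
  exists (L ps'); apply/hP => i; rewrite dec; apply: tri.
    by move/hmax.
  by move=> ci; apply: pair.
case: (pickP (fun q => c q < 0)) => [q0 qq0|noneg].
  have [qs cqs hmin] : exists2 q', c q' < 0 & forall i, c i < 0 -> U q' <= U i.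
    by case: (@arg_minP _ _ _ q0 (fun q => c q < 0) U qq0) => q' cq' hm; exists q'.
  exists (U qs); apply/hP => i; rewrite dec; apply: tri.
    by move=> ci; rewrite nopos in ci.
  by move/hmin.
exists 0; apply/hP => i; rewrite dec; apply: tri.
  by move=> ci; rewrite nopos in ci.
by move=> ci; rewrite noneg in ci.
Qed.

Lemma FMn (J : finType) m (P : (J + 'I_m -> R) -> Prop) :
  polyh P -> polyh (fun x : J -> R => exists u, P (jn x u)).
Proof.
elim: m P => [|m IH] P hP.
  apply: polyh_ext (polyh_comp (h := fun x : J -> R => jn x (fun _ => 0)) hP _).
    move=> x; split=> [h|[u h]]; first by exists (fun _ => 0).
    suff <- : u = (fun _ => 0) by [].
    by apply: funext => -[k hk]; have := hk; rewrite ltn0.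
  by move=> -[j|[k hk]]; [apply: aff_coord | have := hk; rewrite ltn0].
have := IH _ (FM1 hP); apply: polyh_ext => x; split.
  case=> u' [y h]; exists (fun i => match unlift ord_max i with Some i' => u' i' | None => y end).
  by [].
case=> u h; exists (fun i => u (lift ord_max i)), (u ord_max).
suff -> : ext (jn x (fun i => u (lift ord_max i))) (u ord_max) = jn x u by [].
apply: funext => -[j|i] //=; by case: unliftP => [i' ->|->].
Qed.

Lemma cpoly_polyh (J : finType) (S : (J -> R) -> Prop) : cpoly S -> polyh S.
Proof.
move=> [K [P [hP e]]].
pose P' (z : J + 'I_#|K| -> R) := P (jn (fun j => z (inl j)) (fun k => z (inr (enum_rank k)))).
have hP' : polyh P' by apply: polyh_comp hP _ => -[j|k]; apply: aff_coord.
apply: polyh_ext (FMn hP') => x; rewrite e; split.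
  by case=> u pu; exists (fun k => u (enum_rank k)); exact: pu.
case=> u pu; exists (fun i => u (enum_val i)).
change (P (jn x (fun k => u (enum_val (enum_rank k))))).
suff -> : (fun k => u (enum_val (enum_rank k))) = u by [].
by apply: funext => k; rewrite enum_rankK.
Qed.

Lemma aff_unit (g : (unit -> R) -> R) :
  aff g -> forall z, g z = g (fun _ => 0) + (g (fun _ => 1) - g (fun _ => 0)) * z tt.
Proof.
case=> c [b hg] z; rewrite !hg.
have s1 : forall f : unit -> R, \sum_j c j * f j = c tt * f tt.
  by move=> f; rewrite (bigD1 tt) //= big1 ?addr0 // => -[]; rewrite eqxx.
rewrite !s1; ring.
Qed.

Lemma polyh_min (P : (unit -> R) -> Prop) :
  polyh P -> (exists z, P z) -> (exists lb, forall z, P z -> lb <= z tt) ->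
  exists z, P z /\ forall z', P z' -> z tt <= z' tt.
Proof.
move=> [I [g [ha hP]]] [z0 Pz0] [lb hlb].
pose a i := g i (fun _ => 0).
pose c i := g i (fun _ => 1) - g i (fun _ => 0).
have dec : forall i z, g i z = a i + c i * z tt by move=> i z; apply: aff_unit.
have cst : forall x : R, P (fun _ => x) <-> forall i, 0 <= a i + c i * x.
  by move=> x; rewrite hP; split=> h i; have := h i; rewrite dec.
have Pz0' : forall i, 0 <= a i + c i * z0 tt by move=> i; have := (hP z0).1 Pz0 i; rewrite dec.
case: (pickP (fun i => 0 < c i)) => [i0 ci0|nopos]; last first.
  exfalso; pose x := lb - 1.
  have hx : x <= z0 tt by have := hlb _ Pz0; rewrite /x => h; lra.
  have Px : P (fun _ => x).
    apply/cst => i; apply: (le_trans (Pz0' i)); rewrite lerD2l.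
    have ci : c i <= 0 by rewrite leNgt nopos.
    by move: (ler_wnM2l ci hx).
  by have := hlb _ Px => /=; rewrite /x => h; lra.
pose L i := - a i / c i.
have [p cp hmax] : exists2 p, 0 < c p & forall i, 0 < c i -> L i <= L p.
  by case: (@arg_maxP _ _ _ i0 (fun p => 0 < c p) L ci0) => p' cp' hm; exists p'.
have ge : forall x, P (fun _ => x) -> L p <= x.
  move=> x /cst /(_ p); rewrite /L ler_pdivrMr // => h.
  by rewrite -subr_ge0 opprK addrC mulrC.
exists (fun _ => L p); split; last first.
  move=> z' Pz' /=; apply: ge.
  by have -> : (fun _ : unit => z' tt) = z' by apply: funext => -[].
apply/cst => i; case: (ltgtP (c i) 0) => ci.
- have h0 : L p <= z0 tt.
    apply: ge; by have -> : (fun _ : unit => z0 tt) = z0 by apply: funext => -[].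
  apply: (le_trans (Pz0' i)); rewrite lerD2l.
  by rewrite ler_wnM2l // ltW.
- have := hmax i ci; rewrite /L ler_pdivrMr // => h.
  by rewrite -subr_ge0 in h; rewrite addrC (le_trans h) // opprK mulrC addrC.
- by rewrite ci mul0r addr0; have := Pz0' i; rewrite ci mul0r addr0.
Qed.

End Poly.

End MD.
Import MD.

Module ME.
Set Implicit Arguments. Unset Strict Implicit. Unset Printing Implicit Defensive.
Local Open Scope ring_scope.

Section CV.
Variables (R : realType) (d : nat).
Notation vec := 'rV[R]_d.

Definition CV (S : vec -> Prop) := cpoly (fun f : 'I_d -> R => S (\row_i f i)).

Lemma rowK (v : vec) : \row_i v 0 i = v.
Proof. by apply/rowP => i; rewrite mxE. Qed.

Lemma CV_ext (S1 S2 : vec -> Prop) : (forall v, S1 v <-> S2 v) -> CV S1 -> CV S2.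
Proof. by move=> e; apply: cpoly_ext => z; apply: e. Qed.

Lemma CV_and (S1 S2 : vec -> Prop) : CV S1 -> CV S2 -> CV (fun v => S1 v /\ S2 v).
Proof. exact: cpoly_and. Qed.

Lemma CV_bigI (I : finType) (S : I -> vec -> Prop) :
  (forall i, CV (S i)) -> CV (fun v => forall i, S i v).
Proof. by move=> h; apply: (cpoly_bigI (S := fun i f => S i (\row_j f j))). Qed.

Lemma CV_true : CV (fun _ => True).
Proof. exact: cpoly_true. Qed.

Lemma polyh_alleq (J I : finType) (g : I -> (J -> R) -> R) :
  (forall i, aff (g i)) -> polyh (fun z => forall i, g i z = 0).
Proof.
move=> h.
have hp : polyh (fun z => forall p : I * bool, 0 <= (if p.2 then g p.1 z else - g p.1 z)).
  by apply: polyh_ineqs => -[i []] /=; [apply: h | apply/affN/h].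
apply: polyh_ext hp => z; split=> [H i|H [i []] /=].
  apply/eqP; rewrite eq_le; have := H (i, true); have := H (i, false).
  by rewrite /= oppr_ge0 => -> ->.
  by rewrite H.
by rewrite H oppr0.
Qed.

Lemma aff_rowsum (J K : finType) (h : K -> J) (g : K -> vec) i :
  aff (fun z : J -> R => (\sum_k z (h k) *: g k) 0 i).
Proof.
apply: aff_ext; first by move=> z; rewrite summxE; reflexivity.
apply: aff_sum => k; apply: aff_ext; first by move=> z; rewrite mxE mulrC; reflexivity.
exact/affZ/aff_coord.
Qed.

Lemma CV_sum (A B : vec -> Prop) : CV A -> CV B ->
  CV (fun v => exists a b, A a /\ B b /\ v = a + b).
Proof.
move=> hA hB.
pose Q (z : 'I_d + ('I_d + 'I_d) -> R) :=
  A (\row_i z (inr (inl i))) /\ (B (\row_i z (inr (inr i))) /\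
  forall i, z (inl i) - z (inr (inl i)) - z (inr (inr i)) = 0).
have cQ : cpoly Q.
  apply: cpoly_and.
    by apply: (cpoly_comp (S := fun f => A (\row_i f i)) (h := fun z i => z (inr (inl i)))) => // i; apply: aff_coord.
  apply: cpoly_and.
    by apply: (cpoly_comp (S := fun f => B (\row_i f i)) (h := fun z i => z (inr (inr i)))) => // i; apply: aff_coord.
  apply: cpoly_of_polyh; apply: polyh_alleq => i.
  by apply: affB; [apply: affB|]; apply: aff_coord.
apply: cpoly_ext (cpoly_proj cQ) => f; split.
  case=> y [qA [qB qe]]; exists (\row_i y (inl i)), (\row_i y (inr i)); split=> //; split=> //.
  apply/rowP => i; rewrite !mxE; have := qe i => /= /eqP.
  by rewrite -addrA -opprD subr_eq0 => /eqP.
case=> a [b [ha [hb hv]]]; exists (jn (fun i => a 0 i) (fun i => b 0 i)).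
rewrite /Q /= !rowK; split=> //; split=> // i.
apply/eqP; rewrite -addrA -opprD subr_eq0; apply/eqP.
by have := congr1 (fun M : vec => M 0 i) hv; rewrite !mxE.
Qed.

Lemma CV_translate (A : vec -> Prop) (c : vec) : CV A ->
  CV (fun v => exists q, A q /\ v = c + q).
Proof.
move=> hA.
have := cpoly_comp (S := fun f => A (\row_i f i)) (h := fun z i => z i - c 0 i) hA.
move=> /(_ _) H; apply: cpoly_ext (H _) => [f|i]; last by apply: affB; [apply: aff_coord|apply: aff_const].
split.
  move=> Af; exists (\row_i (f i - c 0 i)); split=> //.
  by apply/rowP => i; rewrite !mxE addrC subrK.
case=> q [Aq e]; suff -> : \row_i (f i - c 0 i) = q by [].
apply/rowP => i; rewrite mxE; have := congr1 (fun M : vec => M 0 i) e.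
by rewrite !mxE => ->; rewrite addrC addrK.
Qed.

Lemma CV_Kcone (Omega : finType) (pi : nat -> Omega -> 'I_d -> 'I_d -> R) t w :
  CV (Kcone pi t w).
Proof.
pose V (z : 'I_d + ('I_d + 'I_d * 'I_d) -> R) : vec :=
  \sum_(k < d) z (inr (inl k)) *: e k +
  \sum_(j < d) \sum_(k < d) z (inr (inr (j, k))) *: (pi t w j k *: e j - e k).
pose Q (z : 'I_d + ('I_d + 'I_d * 'I_d) -> R) :=
  (forall k, 0 <= z (inr (inl k))) /\ ((forall jk, 0 <= z (inr (inr jk))) /\
  forall i, z (inl i) - V z 0 i = 0).
have pQ : polyh Q.
  apply: polyh_and; first by apply: polyh_ineqs => k; apply: aff_coord.
  apply: polyh_and; first by apply: polyh_ineqs => k; apply: aff_coord.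
  apply: polyh_alleq => i; apply: affB; first exact: aff_coord.
  apply: aff_ext; first by move=> z; rewrite /V mxE; reflexivity.
  apply: affD; first exact: aff_rowsum.
  apply: aff_ext; first by move=> z; rewrite summxE; reflexivity.
  by apply: aff_sum => j; apply: aff_rowsum.
exists ('I_d + 'I_d * 'I_d)%type, Q; split => // f; split.
  case=> a [b [ha [hb hf]]].
  exists (jn a (fun jk => b jk.1 jk.2)); split; first by [].
  split; first by case=> j k; apply: hb.
  move=> i; apply/eqP; rewrite subr_eq0; apply/eqP.
  by have := congr1 (fun M : vec => M 0 i) hf; rewrite mxE.
case=> u [ha [hb he]]; exists (fun k => u (inl k)), (fun j k => u (inr (j, k))).
split=> //; split; first by move=> j k; apply: (hb (j, k)).
apply/rowP => i; rewrite mxE; apply/eqP; rewrite -subr_eq0; apply/eqP.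
exact: he.
Qed.

Lemma CV_line (S : vec -> Prop) (j : 'I_d) : CV S ->
  cpoly (fun z : unit -> R => S (z tt *: e j)).
Proof.
move=> hS.
have := cpoly_comp (S := fun f => S (\row_i f i)) (h := fun (z : unit -> R) i => z tt * e j 0 i) hS.
move=> /(_ _) H; apply: cpoly_ext (H _) => [z|i]; last first.
  by apply: aff_ext; [move=> z; rewrite mulrC; reflexivity| apply/affZ/aff_coord].
suff -> : \row_i (z tt * e j 0 i) = z tt *: e j by [].
by apply/rowP => i; rewrite !mxE.
Qed.

End CV.

End ME.
Import ME.

Module MG.
Set Implicit Arguments. Unset Strict Implicit. Unset Printing Implicit Defensive.
Local Open Scope classical_set_scope.
Local Open Scope ring_scope.

Section Model.
Variables (R : realType) (d : nat) (Omega : finType) (T : nat)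
  (F : nat -> {set {set Omega}}) (pi : nat -> Omega -> 'I_d -> 'I_d -> R).
Hypothesis hF : filtration T F.
Hypothesis hpi : exchange_rates T F pi.
Notation vec := 'rV[R]_d.

Lemma CV_eq (S1 S2 : vec -> Prop) : CV S1 -> (forall v, S1 v <-> S2 v) -> CV S2.
Proof. by move=> h e; exact (CV_ext e h). Qed.

Definition sab t (w w' : Omega) : bool :=
  [exists A : {set Omega}, [&& A \in F t, w \in A & w' \in A]].

Lemma sabP t w w' : reflect (sameatom F t w w') (sab t w w').
Proof.
apply: (iffP existsP) => [[A /and3P[h1 h2 h3]]|[A h1 /andP[h2 h3]]].
  by exists A => //; rewrite h2 h3.
by exists A; rewrite h1 h2 h3.
Qed.

Lemma meas_sab t w : (t <= T)%N -> meas F t (fun w' => sab t w w').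
Proof.
move=> tT; apply/(measP F) => w1 w2 h12.
apply/idP/idP => /sabP h; apply/sabP.
  exact (sa_trans hF tT h h12).
exact (sa_trans hF tT h (sa_sym h12)).
Qed.

Definition rep t (w : Omega) : Omega := odflt w [pick w' | sab t w w'].

Lemma rep_sa t w : (t <= T)%N -> sameatom F t w (rep t w).
Proof.
move=> tT; rewrite /rep; case: pickP => [w' /sabP //|/(_ w) /negbT /negP h].
by exfalso; apply: h; apply/sabP; exact (sa_refl hF w tT).
Qed.

Lemma rep_eq t w w' : (t <= T)%N -> sameatom F t w w' -> rep t w = rep t w'.
Proof.
move=> tT h; rewrite /rep.
have e : sab t w =1 sab t w'.
  move=> x; apply/idP/idP => /sabP hx; apply/sabP.
    exact (sa_trans hF tT (sa_sym h) hx).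
  exact (sa_trans hF tT h hx).
rewrite (eq_pick e); case: pickP => // /(_ w) /negbT /negP h'.
by exfalso; apply: h'; apply/sabP; exact (sa_sym h).
Qed.

Definition QP t (q : Omega -> vec) (y : nat -> Omega -> vec) :=
  meas F t q /\
  (forall s, (t < s <= T.+1)%N -> meas F s.-1 (y s)) /\
  (forall w, y T.+1 w = 0) /\
  inK F pi t (fun w => q w - y t.+1 w) /\
  (forall s, (t < s <= T)%N -> inK F pi s (fun w => y s w - y s.+1 w)).

Lemma inQ_QP t q : inQ T F pi t q <-> exists y, QP t q y.
Proof.
split; first by case=> m [y [h1 [h2 [h3 h4]]]]; exists y.
by case=> y [m [h1 [h2 [h3 h4]]]]; split=> //; exists y.
Qed.

Lemma Qnode_T w v : Qnode T F pi T w v <-> Kcone pi T w v.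
Proof.
split.
  case=> z [/inQ_QP [y [_ [_ [h0 [[_ hk] _]]]]] <-].
  by have := hk w; rewrite h0 subr0.
move=> hv; exists (fun w' => if sab T w w' then v else 0); split; last first.
  by have := sa_refl hF w (leqnn T) => /sabP ->.
apply/inQ_QP; exists (fun _ _ => 0); split.
  exact (meas1 (fun b : bool => if b then v else 0) (meas_sab w (leqnn T))).
split; first by [].
split; first by [].
split.
  split.
    apply: (meas_ext (x := fun w' => if sab T w w' then v else 0)).
      by move=> w'; rewrite subr0.
    exact (meas1 (fun b : bool => if b then v else 0) (meas_sab w (leqnn T))).
  move=> w'; rewrite subr0; case: ifP => [/sabP h|_]; last exact: Kcone0.
  exact (Kcone_sa hpi (leqnn T) h hv).
by move=> s /andP[h1 h2]; exfalso; move: h1 h2; rewrite ltnNge => /negP.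
Qed.


Lemma Qnode_step t w v : (t < T)%N ->
  Qnode T F pi t w v <-> exists a b, Kcone pi t w a /\
    (forall w', sameatom F t w w' -> Qnode T F pi t.+1 w' b) /\ v = a + b.
Proof.
move=> tT; have tT' : (t <= T)%N by exact: ltnW.
split.
  case=> z [/inQ_QP [y [mz [my [h0 [[mk hk] hs]]]]] <-].
  exists (z w - y t.+1 w), (y t.+1 w); split; first exact: hk.
  split; last by rewrite subrK.
  move=> w' hw'.
  have myt : meas F t (y t.+1) by apply: (my t.+1); rewrite ltnSn /= ltnS ltnW.
  have e : y t.+1 w = y t.+1 w' by move/(measP F): myt => /(_ _ _ hw').
  exists (y t.+1); split; last by rewrite e.
  apply/inQ_QP; exists y; split.
    exact (meas_mono hF (leqnSn t) tT myt).
  split; first by move=> s /andP[h1 h2]; apply: my; rewrite h2 (ltn_trans (ltnSn t) h1).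
  split; first exact: h0.
  split; first by apply: hs; rewrite ltnSn.
  by move=> s /andP[h1 h2]; apply: hs; rewrite h2 (ltn_trans (ltnSn t) h1).
case=> a [b [ha [hb ->]]].
have C : forall w', exists p : (Omega -> vec) * (nat -> Omega -> vec),
    sameatom F t w w' -> QP t.+1 p.1 p.2 /\ p.1 w' = b.
  move=> w'; case: (pselect (sameatom F t w w')) => h.
    have [z [/inQ_QP [y hy] hz]] := hb w' h; by exists (z, y).
  by exists (fun=> 0, fun _ _ => 0).
case: (choice C) => Cf hC.
pose r w'' := rep t.+1 w''.
have HC : forall w'', sab t w w'' ->
    QP t.+1 (Cf (r w'')).1 (Cf (r w'')).2 /\ (Cf (r w'')).1 w'' = b.
  move=> w'' /sabP h.
  have h1 : sameatom F t.+1 w'' (r w'') by apply: rep_sa.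
  have h2 : sameatom F t w (r w'').
    exact (sa_trans hF tT' h (sa_refine hF (leqnSn t) tT h1)).
  have [hq hb'] := hC _ h2; split=> //.
  rewrite -hb'; have := hq.1; move/(measP F) => /(_ _ _ h1) //.
pose Y s w'' := if sab t w w'' then (if s == t.+1 then b else (Cf (r w'')).2 s w'') else 0.
pose z w'' := if sab t w w'' then a + b else 0.
have msab : meas F t (fun w'' => sab t w w'') by apply: meas_sab.
have mY : forall s, (t < s <= T.+1)%N -> meas F s.-1 (Y s).
  move=> s /andP[h1 h2]; case: (eqVneq s t.+1) => [es|ns].
    rewrite es; apply: (meas_ext (x := fun w'' => if sab t w w'' then b else 0)).
      by move=> w''; rewrite /Y eqxx.
    exact (meas1 (fun bb : bool => if bb then b else 0) msab).
  have s1 : (t < s.-1)%N.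
    by move: h1 ns => /= h1 /eqP ns; lia.
  have s2 : (s.-1 <= T)%N by lia.
  apply/(measP F) => w1 w2 h12.
  have ht : sameatom F t w1 w2 by apply: (sa_refine hF (ltnW s1) s2 h12).
  have e1 : sab t w w1 = sab t w w2 by move/(measP F): msab => /(_ _ _ ht).
  rewrite /Y e1 (negbTE ns); case: ifP => // hs2.
  have ht1 : sameatom F t.+1 w1 w2 by apply: (sa_refine hF s1 s2 h12).
  have er : r w1 = r w2 by apply: rep_eq.
  rewrite er; have [hq _] := HC _ hs2.
  have hs' : (t.+1 < s <= T.+1)%N by rewrite h2 andbT; lia.
  by have := hq.2.1 s hs' => /(measP F) /(_ _ _ h12).
exists z; split; last by rewrite /z (introT (sabP _ _ _) (sa_refl hF w tT')).
apply/inQ_QP; exists Y; split.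
  exact (meas1 (fun bb : bool => if bb then a + b else 0) msab).
split; first exact: mY.
split.
  move=> w''; rewrite /Y (negbTE (_ : T.+1 != t.+1)); last by rewrite eqSS neq_ltn tT orbT.
  by case: ifP => // /HC [hq _]; apply: hq.2.2.1.
split.
  split.
    have mY1 : meas F t (Y t.+1) by apply: (mY t.+1); rewrite ltnSn /= ltnS.
    exact (meas2 (fun u v => u - v) (meas1 (fun bb : bool => if bb then a + b else 0) msab) mY1).
  move=> w''; rewrite /z /Y eqxx; case: ifP => [/sabP h|_]; last by rewrite subrr; apply: Kcone0.
  by rewrite addrK; exact (Kcone_sa hpi tT' h ha).
move=> s /andP[h1 h2]; split.
  have m1 : meas F s (Y s).
    by apply: (meas_mono hF (leq_pred s) h2); apply: mY; apply/andP; split; lia.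
  have m2 : meas F s (Y s.+1) by apply: (mY s.+1); apply/andP; split; lia.
  exact (meas2 (fun u v => u - v) m1 m2).
move=> w''; rewrite /Y; case: ifP => [hs|_]; last by rewrite subrr; apply: Kcone0.
have [hq hq1] := HC _ hs.
rewrite (negbTE (_ : s.+1 != t.+1)); last by rewrite eqSS neq_ltn h1 orbT.
case: (eqVneq s t.+1) => [es|ns].
  subst s; rewrite -hq1; exact: hq.2.2.2.1.2.
have hsc : (t.+1 < s <= T)%N by apply/andP; split; [move/eqP: ns => ns; lia | exact h2].
exact ((hq.2.2.2.2 s hsc).2 w'').
Qed.

Lemma CV_Qnode t w : (t <= T)%N -> CV (Qnode T F pi t w).
Proof.
move=> tT; have [n hn] : exists n, (t + n = T)%N by exists (T - t)%N; rewrite subnKC.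
elim: n t w tT hn => [|n IH] t w tT hn.
  rewrite addn0 in hn; subst t.
  by apply: (CV_eq (CV_Kcone pi T w)) => v; rewrite Qnode_T.
have tlt : (t < T)%N by rewrite -hn addnS ltnS leq_addr.
apply: (@CV_ext _ _ (fun v => exists a b, Kcone pi t w a /\
   (forall w', sameatom F t w w' -> Qnode T F pi t.+1 w' b) /\ v = a + b)).
  by move=> v; rewrite (Qnode_step _ _ tlt).
apply: CV_sum; first exact: CV_Kcone.
apply: (CV_bigI (S := fun w' v => sameatom F t w w' -> Qnode T F pi t.+1 w' v)) => w'.
case: (pselect (sameatom F t w w')) => h.
  have hn' : (t.+1 + n = T)%N by rewrite addSnnS.
  apply: (CV_eq (IH t.+1 w' tlt hn')) => v.
  by split=> [H _|H]; [exact H | exact: H].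
by apply: (CV_eq (CV_true R d)) => v; split.
Qed.

Lemma CV_Zrec (xi : nat -> Omega -> vec) n w : CV (Zrec T F pi xi n w).
Proof.
have CU : forall t w, (t <= T)%N -> CV (Uad T F pi xi t w).
  move=> t w' tT; apply: (CV_eq (CV_translate (xi t w') (CV_Qnode w' tT))) => v.
  by split; [case=> q [h1 h2]; exists q | case=> q h1 h2; exists q].
elim: n w => [|n IH] w /=; first exact: CU.
apply: CV_and; first by apply: CU; apply: leq_subr.
have CW : CV (fun v => forall w', sameatom F (T - n.+1) w w' -> Zrec T F pi xi n w' v).
  apply: (CV_bigI (S := fun w' v => sameatom F (T - n.+1) w w' -> Zrec T F pi xi n w' v)) => w'.
  case: (pselect (sameatom F (T - n.+1) w w')) => h.
    by apply: (CV_eq (IH w')) => v; split=> [H _|H]; [exact H | exact: H].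
  by apply: (CV_eq (CV_true R d)) => v; split.
apply: (CV_eq (CV_sum CW (CV_Qnode w (leq_subr n.+1 T)))) => v.
split; first by case=> a [b [ha [hb ->]]]; exists a => //; exists b.
by case=> a ha [b hb <-]; exists a, b; do !split.
Qed.

Lemma CV_Zad0 (xi : nat -> Omega -> vec) : CV (Zad0 T F pi xi).
Proof.
apply: (CV_eq (CV_bigI (fun w => CV_Zrec xi (T - 0) w))) => v.
by split.
Qed.

End Model.

End MG.
Import MG.

Module MH.
Set Implicit Arguments. Unset Strict Implicit. Unset Printing Implicit Defensive.
Local Open Scope classical_set_scope.
Local Open Scope ring_scope.

Section Part1a.
Variables (R : realType) (d : nat) (Omega : finType) (T : nat)
  (F : nat -> {set {set Omega}}) (pi : nat -> Omega -> 'I_d -> 'I_d -> R)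
  (xi : nat -> Omega -> 'rV[R]_d).
Hypothesis hF : filtration T F.
Hypothesis hpi : exchange_rates T F pi.
Hypothesis hxi : adapted_option T F xi.
Notation vec := 'rV[R]_d.

Definition stopt (tau : Omega -> nat) :=
  (forall w, (tau w <= T)%N) /\ forall s, meas F s (fun w => (tau w <= s)%N).

Definition chiOf (tau : Omega -> nat) : nat -> Omega -> R :=
  fun s w => ((tau w == s) : nat)%:R.

Lemma stopt_lt tau s : stopt tau -> (s <= T)%N -> meas F s (fun w => (tau w < s)%N).
Proof.
move=> [_ hm] sT; case: s sT => [|s] sT.
  by apply: (meas_ext (x := fun _ => false)) => // w; rewrite ltn0.
exact (meas_mono hF (leqnSn s) sT (hm s)).
Qed.

Lemma mixed_chi tau : stopt tau -> mixed T F (chiOf tau).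
Proof.
move=> st; split.
  move=> s sT; apply: (meas_ext (x := fun w => (((tau w <= s)%N && ~~ (tau w < s)%N) : nat)%:R)).
    by move=> w; rewrite -leqNgt -eqn_leq.
  exact (meas1 (fun b : bool => (b : nat)%:R) (meas2 (fun a b => a && ~~ b) (st.2 s) (stopt_lt st sT))).
split; first by move=> t w; rewrite /chiOf; case: (_ == _); rewrite /= ?mulr1n ?mulr0n ?lexx ?ler01.
split.
  move=> w; have h : (tau w < T.+1)%N by rewrite ltnS st.1.
  rewrite (bigD1 (Ordinal h)) //= /chiOf eqxx big1 ?addr0 // => i /negbTE hi.
  case: eqP => // e; move: hi; have -> : i = Ordinal h by apply: val_inj; rewrite /= e.
  by rewrite eqxx.
by move=> t w tT; rewrite /chiOf; case: eqP => // e; have := st.1 w; rewrite e leqNgt tT.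
Qed.

Lemma stopt_const c : (c <= T)%N -> stopt (fun _ => c).
Proof. by move=> cT; split. Qed.

Lemma stopt_min tau t : stopt tau -> (t <= T)%N -> stopt (fun w => minn (tau w) t).
Proof.
move=> [h1 h2] tT; split; first by move=> w; rewrite geq_min h1.
move=> s; apply: (meas_ext (x := fun w => (tau w <= s)%N || (t <= s)%N)).
  by move=> w; rewrite geq_min.
exact (meas1 (fun b => b || (t <= s)%N) (h2 s)).
Qed.

Lemma stopt_max tau t : stopt tau -> (t <= T)%N -> stopt (fun w => maxn (tau w) t).
Proof.
move=> [h1 h2] tT; split; first by move=> w; rewrite geq_max h1.
move=> s; apply: (meas_ext (x := fun w => (tau w <= s)%N && (t <= s)%N)).
  by move=> w; rewrite geq_max.
exact (meas1 (fun b => b && (t <= s)%N) (h2 s)).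
Qed.

Variable Y : (nat -> Omega -> R) -> nat -> Omega -> vec.
Hypothesis hY : PhiAg T F pi xi Y.

Lemma Y_meas tau t : stopt tau -> (t <= T.+1)%N -> meas F t.-1 (Y (chiOf tau) t).
Proof. by move=> st tT; have [[hs _] _] := (hY.1 _ (mixed_chi st), hY.2); apply: hs.1. Qed.

Lemma Y_end tau w : stopt tau -> Y (chiOf tau) T.+1 w = 0.
Proof. by move=> st; have [hs _] := hY.1 _ (mixed_chi st); apply: hs.2. Qed.

Lemma Y_K tau t : stopt tau -> (t <= T)%N ->
  inK F pi t (fun w => Y (chiOf tau) t w - chiOf tau t w *: xi t w - Y (chiOf tau) t.+1 w).
Proof. by move=> st tT; have [_ hk] := hY.1 _ (mixed_chi st); apply: hk. Qed.

Lemma Y_na tau tau' t w : stopt tau -> stopt tau' ->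
  (forall s, (s < t)%N -> chiOf tau s w = chiOf tau' s w) ->
  Y (chiOf tau) t w = Y (chiOf tau') t w.
Proof. by move=> st st' h; apply: hY.2 => //; apply: mixed_chi. Qed.

Lemma PhiAg_Zad n : forall t, (t + n = T)%N -> forall tau, stopt tau ->
  forall w, (t <= tau w)%N -> Zad T F pi xi t w (Y (chiOf tau) t w).
Proof.
elim: n => [|n IH] t htn tau st w htw.
  rewrite addn0 in htn; subst t.
  rewrite /Zad subnn /=; exists (Y (chiOf tau) T w - xi T w); last by rewrite addrC subrK.
  apply/Qnode_T => //.
  have := (Y_K st (leqnn T)).2 w; rewrite Y_end // subr0.
  have -> : chiOf tau T w = 1 by rewrite /chiOf (_ : tau w = T) ?eqxx //; apply/eqP; rewrite eqn_leq st.1 htw.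
  by rewrite scale1r.
have tT : (t < T)%N by lia.
have tT' : (t <= T)%N by lia.
rewrite /Zad (_ : (T - t)%N = n.+1); last by lia.
rewrite /= (_ : (T - n.+1)%N = t); last by lia.
split.
  pose tau1 w := minn (tau w) t.
  have st1 : stopt tau1 by apply: stopt_min.
  have e1 : Y (chiOf tau) t w = Y (chiOf tau1) t w.
    apply: Y_na => // s st'; rewrite /chiOf /tau1.
    have -> : (tau w == s) = false by apply/negbTE; rewrite neq_ltn; apply/orP; right; lia.
    by have -> : (minn (tau w) t == s) = false by apply/negbTE; rewrite neq_ltn; apply/orP; right; lia.
  have c1 : chiOf tau1 t w = 1 by rewrite /chiOf /tau1 (_ : minn (tau w) t = t) ?eqxx //; lia.
  exists (Y (chiOf tau1) t w - xi t w); last by rewrite e1 addrC subrK.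
  exists (fun w' => Y (chiOf tau1) t w' - chiOf tau1 t w' *: xi t w'); split; last by rewrite c1 scale1r.
  apply/inQ_QP; exists (Y (chiOf tau1)); split.
    have m1 : meas F t (Y (chiOf tau1) t).
      by apply: (meas_mono hF (leq_pred t) tT'); apply: Y_meas => //; lia.
    exact (meas2 (fun a b => a - b) m1 (meas2 (fun c x => c *: x) ((mixed_chi st1).1 t tT') (hxi tT'))).
  split; first by move=> s /andP[_ hs]; apply: Y_meas.
  split; first by move=> w'; apply: Y_end.
  split; first exact: (Y_K st1 tT').
  move=> s /andP[h1 h2]; apply: (inK_ext _ (Y_K st1 h2)) => w'.
  have -> : chiOf tau1 s w' = 0 by rewrite /chiOf /tau1; case: eqP => // e; lia.
  by rewrite scale0r subr0.
pose tau2 w := maxn (tau w) t.+1.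
have st2 : stopt tau2 by apply: stopt_max.
have e2 : Y (chiOf tau) t w = Y (chiOf tau2) t w.
  apply: Y_na => // s st'; rewrite /chiOf /tau2.
  have -> : (tau w == s) = false by apply/negbTE; rewrite neq_ltn; apply/orP; right; lia.
  by have -> : (maxn (tau w) t.+1 == s) = false by apply/negbTE; rewrite neq_ltn; apply/orP; right; lia.
have mY1 : meas F t (Y (chiOf tau2) t.+1) by apply: (@Y_meas tau2 t.+1 st2); lia.
exists (Y (chiOf tau2) t.+1 w).
  move=> w' hw'; have := IH t.+1 _ tau2 st2 w' _; rewrite /Zad (_ : (T - t.+1)%N = n); last by lia.
  move/(measP F): mY1 => /(_ _ _ hw') ->; apply; [lia | rewrite /tau2; lia].
exists (Y (chiOf tau2) t w - Y (chiOf tau2) t.+1 w); last by rewrite e2 addrC subrK.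
exists (fun w' => Y (chiOf tau2) t w' - Y (chiOf tau2) t.+1 w'); split=> //.
apply/inQ_QP; exists (fun _ _ => 0); split.
  have m1 : meas F t (Y (chiOf tau2) t).
    by apply: (meas_mono hF (leq_pred t) tT'); apply: Y_meas => //; lia.
  exact (meas2 (fun a b => a - b) m1 mY1).
split; first by [].
split; first by [].
split.
  apply: (inK_ext _ (Y_K st2 tT')) => w'.
  have -> : chiOf tau2 t w' = 0 by rewrite /chiOf /tau2; case: eqP => // e; lia.
  by rewrite scale0r !subr0.
move=> s _; apply: (inK_ext _ (inK0 F pi s)) => w'; by rewrite subr0.
Qed.

Lemma PhiAg_Zad0 x : Yzero T F Y x -> Zad0 T F pi xi x.
Proof.
move=> hx w; have st : stopt (fun _ => T) by apply: stopt_const.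
have := @PhiAg_Zad T 0 (add0n T) _ st w (leq0n T).
by rewrite (hx _ (mixed_chi st)).
Qed.

End Part1a.

End MH.
Import MH.

Module MI1.
Set Implicit Arguments. Unset Strict Implicit. Unset Printing Implicit Defensive.
Local Open Scope classical_set_scope.
Local Open Scope ring_scope.

Section Part1b.
Variables (R : realType) (d : nat) (Omega : finType) (T : nat)
  (F : nat -> {set {set Omega}}) (pi : nat -> Omega -> 'I_d -> 'I_d -> R)
  (xi : nat -> Omega -> 'rV[R]_d).
Hypothesis hF : filtration T F.
Hypothesis hpi : exchange_rates T F pi.
Hypothesis hxi : adapted_option T F xi.
Notation vec := 'rV[R]_d.
Notation QP := (QP T F pi).

Lemma Zad_T w v : Zad T F pi xi T w v <-> Uad T F pi xi T w v.
Proof. by rewrite /Zad subnn. Qed.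

Lemma Zad_split t w v : (t < T)%N ->
  Zad T F pi xi t w v <-> Uad T F pi xi t w v /\
    exists a b, (forall w', sameatom F t w w' -> Zad T F pi xi t.+1 w' a) /\
      Qnode T F pi t w b /\ v = a + b.
Proof.
move=> tT; rewrite /Zad (_ : (T - t)%N = (T - t.+1).+1); last by lia.
rewrite /= (_ : (T - (T - t.+1).+1)%N = t); last by lia.
split; case=> hu h; split=> //.
  by case: h => a ha [b hb <-]; exists a, b.
by case: h => a [b [ha [hb ->]]]; exists a => //; exists b.
Qed.

Lemma QP_glue t (C : Omega -> (Omega -> vec) * (nat -> Omega -> vec)) : (t <= T)%N ->
  (forall w, QP t (C w).1 (C w).2) ->
  QP t (fun w => (C (rep F t w)).1 w) (fun s w => (C (rep F t w)).2 s w).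
Proof.
move=> tT hC.
have hr : forall s w1 w2, (t <= s)%N -> (s <= T)%N -> sameatom F s w1 w2 -> rep F t w1 = rep F t w2.
  by move=> s w1 w2 ts sT h; exact (rep_eq hF tT (sa_refine hF ts sT h)).
have mq : meas F t (fun w => (C (rep F t w)).1 w).
  apply/(measP F) => w1 w2 h; rewrite (hr t w1 w2 (leqnn t) tT h).
  by have := (hC (rep F t w2)).1; move/(measP F) => /(_ _ _ h).
have my : forall s, (t < s <= T.+1)%N -> meas F s.-1 (fun w => (C (rep F t w)).2 s w).
  move=> s hs; apply/(measP F) => w1 w2 h; rewrite (hr s.-1 w1 w2) //; try lia.
  by have := (hC (rep F t w2)).2.1 s hs; move/(measP F) => /(_ _ _ h).
split=> //; split=> //; split; first by move=> w; apply: (hC _).2.2.1.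
split.
  split; first by apply: (meas2 (fun a b => a - b) mq (my t.+1 _)); lia.
  by move=> w; apply: ((hC (rep F t w)).2.2.2.1.2 w).
move=> s hs; split.
  apply: (meas2 (fun a b => a - b) _ (my s.+1 _)); last by lia.
  by apply: (meas_mono hF (leq_pred s) _ (my s _)); lia.
by move=> w; apply: (((hC (rep F t w)).2.2.2.2 s hs).2 w).
Qed.

Lemma Ustep t (v : Omega -> vec) : (t <= T)%N -> meas F t v ->
  (forall w, Zad T F pi xi t w (v w)) ->
  exists qy : (Omega -> vec) * (nat -> Omega -> vec),
    QP t qy.1 qy.2 /\ forall w, v w = xi t w + qy.1 w.
Proof.
move=> tT mv hz.
have C : forall w, exists qy : (Omega -> vec) * (nat -> Omega -> vec),
    QP t qy.1 qy.2 /\ v w = xi t w + qy.1 w.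
  move=> w; have hu : Uad T F pi xi t w (v w).
    case: (ltngtP t T) => [tlt|tgt|e]; first by case: (Zad_split w (v w) tlt) => /(_ (hz w)) [].
      by lia.
    by subst t; apply/Zad_T; apply: hz.
  case: hu => p [z [/inQ_QP [y hy] hzw]] ->.
  by exists (z, y); split=> //=; rewrite hzw.
case: (choice C) => Cf hC.
exists ((fun w => (Cf (rep F t w)).1 w), (fun s w => (Cf (rep F t w)).2 s w)); split.
  by apply: QP_glue => // w; apply: (hC w).1.
move=> w /=; have hs := rep_sa hF w tT.
have [hq he] := hC (rep F t w).
move/(measP F): (mv) => /(_ _ _ hs) ->; rewrite he.
move/(measP F): (hxi tT) => /(_ _ _ hs) ->.
by have := hq.1; move/(measP F) => /(_ _ _ hs) ->.
Qed.

Lemma Vstep t (v : Omega -> vec) : (t < T)%N -> meas F t v ->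
  (forall w, Zad T F pi xi t w (v w)) ->
  exists p : ((Omega -> vec) * (nat -> Omega -> vec)) * (Omega -> vec),
    QP t p.1.1 p.1.2 /\ meas F t p.2 /\ (forall w, v w = p.2 w + p.1.1 w) /\
    forall w, Zad T F pi xi t.+1 w (p.2 w).
Proof.
move=> tT mv hz; have tT' : (t <= T)%N by lia.
have C : forall w, exists p : ((Omega -> vec) * (nat -> Omega -> vec)) * vec,
    QP t p.1.1 p.1.2 /\ v w = p.2 + p.1.1 w /\
    forall w', sameatom F t w w' -> Zad T F pi xi t.+1 w' p.2.
  move=> w; have [_ [a [b [ha [[z [/inQ_QP [y hy] hzw]] ->]]]]] := (Zad_split w (v w) tT).1 (hz w).
  by exists ((z, y), a); split=> //=; rewrite hzw.
case: (choice C) => Cf hC.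
exists (((fun w => (Cf (rep F t w)).1.1 w), (fun s w => (Cf (rep F t w)).1.2 s w)),
        (fun w => (Cf (rep F t w)).2)); split.
  by apply: (QP_glue (C := fun w => (Cf w).1)) => // w; apply: (hC w).1.
split.
  apply/(measP F) => w1 w2 h /=; rewrite (rep_eq hF tT' h) //.
split.
  move=> w /=; have hs := rep_sa hF w tT'.
  have [hq [he _]] := hC (rep F t w).
  move/(measP F): (mv) => /(_ _ _ hs) ->; rewrite he.
  by have := hq.1; move/(measP F) => /(_ _ _ hs) ->.
move=> w /=; have hs := rep_sa hF w tT'.
by apply: (hC (rep F t w)).2.2; apply: sa_sym.
Qed.

End Part1b.

End MI1.
Import MI1.

Module MI2.
Set Implicit Arguments. Unset Strict Implicit. Unset Printing Implicit Defensive.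
Local Open Scope classical_set_scope.
Local Open Scope ring_scope.

Section Part1c.
Variables (R : realType) (d : nat) (Omega : finType) (T : nat)
  (F : nat -> {set {set Omega}}) (pi : nat -> Omega -> 'I_d -> 'I_d -> R)
  (xi : nat -> Omega -> 'rV[R]_d).
Hypothesis hF : filtration T F.
Hypothesis hpi : exchange_rates T F pi.
Hypothesis hxi : adapted_option T F xi.
Notation vec := 'rV[R]_d.
Notation QP := (QP T F pi).
Variable x : vec.
Hypothesis hx : Zad0 T F pi xi x.

Lemma Uex t (v : Omega -> vec) : exists qy : (Omega -> vec) * (nat -> Omega -> vec),
  ((t <= T)%N /\ meas F t v /\ forall w, Zad T F pi xi t w (v w)) ->
  QP t qy.1 qy.2 /\ forall w, v w = xi t w + qy.1 w.
Proof.
case: (pselect ((t <= T)%N /\ meas F t v /\ forall w, Zad T F pi xi t w (v w))).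
  by case=> h1 [h2 h3]; have [qy hq] := Ustep hF hxi h1 h2 h3; exists qy.
by move=> h; exists ((fun=> 0), (fun _ _ => 0)).
Qed.

Lemma Vex t (v : Omega -> vec) : exists p : ((Omega -> vec) * (nat -> Omega -> vec)) * (Omega -> vec),
  ((t < T)%N /\ meas F t v /\ forall w, Zad T F pi xi t w (v w)) ->
  QP t p.1.1 p.1.2 /\ meas F t p.2 /\ (forall w, v w = p.2 w + p.1.1 w) /\
    forall w, Zad T F pi xi t.+1 w (p.2 w).
Proof.
case: (pselect ((t < T)%N /\ meas F t v /\ forall w, Zad T F pi xi t w (v w))).
  by case=> h1 [h2 h3]; have [p hp] := Vstep hF h1 h2 h3; exists p.
by move=> h; exists (((fun=> 0), (fun _ _ => 0)), fun=> 0).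
Qed.

Definition Uf t v := proj1_sig (cid (Uex t v)).
Definition Vf t v := proj1_sig (cid (Vex t v)).

Fixpoint zz (n : nat) : Omega -> vec :=
  match n with 0 => fun _ => x | n'.+1 => (Vf n' (zz n')).2 end.

Lemma zz_inv t : (t <= T)%N -> meas F t.-1 (zz t) /\ forall w, Zad T F pi xi t w (zz t w).
Proof.
elim: t => [_|t IH tT]; first by split=> // w; apply: hx.
have [m1 z1] := IH (ltnW tT).
have m1' : meas F t (zz t) by apply: (meas_mono hF (leq_pred t) (ltnW tT) m1).
have := proj2_sig (cid (Vex t (zz t))) (conj tT (conj m1' z1)).
by case=> _ [h2 [_ h4]].
Qed.

Definition q1 t := (Uf t (zz t)).1.
Definition y1 t := (Uf t (zz t)).2.
Definition q2 t := (Vf t (zz t)).1.1.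
Definition y2 t := (Vf t (zz t)).1.2.

Lemma hU t : (t <= T)%N -> QP t (q1 t) (y1 t) /\ forall w, zz t w = xi t w + q1 t w.
Proof.
move=> tT; have [m z] := zz_inv tT.
exact: (proj2_sig (cid (Uex t (zz t))) (conj tT (conj (meas_mono hF (leq_pred t) tT m) z))).
Qed.

Lemma hV t : (t < T)%N -> QP t (q2 t) (y2 t) /\ forall w, zz t w = zz t.+1 w + q2 t w.
Proof.
move=> tT; have [m z] := zz_inv (ltnW tT).
have := proj2_sig (cid (Vex t (zz t))) (conj tT (conj (meas_mono hF (leq_pred t) (ltnW tT) m) z)).
by case=> h1 [_ [h3 _]].
Qed.

Definition lam (chi : nat -> Omega -> R) t w := 1 - \sum_(s < t) chi s w.
Definition Ef (chi : nat -> Omega -> R) s u w :=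
  chi s w *: y1 s u w + (lam chi s w - chi s w) *: y2 s u w.
Definition Ydef (chi : nat -> Omega -> R) t w :=
  if (t <= T)%N then lam chi t w *: zz t w + \sum_(s < t) Ef chi s t w else 0.

Lemma lam_succ (chi : nat -> Omega -> R) t w : lam chi t.+1 w = lam chi t w - chi t w.
Proof. by rewrite /lam big_ord_recr /= opprD addrA. Qed.

Lemma sum_le1 (chi : nat -> Omega -> R) t w : mixed T F chi -> (t <= T)%N -> \sum_(s < t.+1) chi s w <= 1.
Proof.
move=> [_ [h01 [hs _]]] tT; rewrite -(hs w).
rewrite -!(big_mkord xpredT (fun s => chi s w)).
rewrite [X in _ <= X](big_cat_nat _ (n := t.+1)) //=.
rewrite lerDl; apply: sumr_ge0 => i _; by case/andP: (h01 i w).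
Qed.

Lemma coef_ge0 (chi : nat -> Omega -> R) t w : mixed T F chi -> (t <= T)%N -> 0 <= lam chi t w - chi t w.
Proof. by move=> hm tT; rewrite -lam_succ /lam subr_ge0; apply: sum_le1. Qed.

Lemma lamT (chi : nat -> Omega -> R) w : mixed T F chi -> lam chi T w = chi T w.
Proof.
move=> [_ [_ [hs _]]]; apply/eqP; rewrite /lam subr_eq -(hs w) big_ord_recr /=.
by rewrite addrC.
Qed.

Lemma meas_lam (chi : nat -> Omega -> R) t : mixed T F chi -> (t <= T.+1)%N -> meas F t.-1 (lam chi t).
Proof.
move=> [hm _] tT.
apply: (meas1 (fun a => 1 - a)); apply: meas_sumR => s st.
apply: (meas_mono hF (_ : (s <= t.-1)%N) _ (hm s _)); lia.
Qed.


Lemma lin2 (a b : R) (u1 v1 u2 v2 : vec) :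
  (a *: u1 + b *: u2) - (a *: v1 + b *: v2) = a *: (u1 - v1) + b *: (u2 - v2).
Proof. by rewrite !scalerBr opprD addrACA. Qed.

Lemma meas_Ef (chi : nat -> Omega -> R) s t : mixed T F chi -> (s < t)%N -> (t <= T)%N ->
  meas F t.-1 (Ef chi s t).
Proof.
move=> hm st tT.
have m1 : meas F t.-1 (chi s) by apply: (meas_mono hF (_ : (s <= t.-1)%N) _ (hm.1 s _)); lia.
have m2 : meas F t.-1 (lam chi s).
  by apply: (meas_mono hF (_ : (s.-1 <= t.-1)%N) _ (meas_lam hm _)); lia.
have m3 : meas F t.-1 (y1 s t) by apply: ((hU _).1.2.1 t); lia.
have m4 : meas F t.-1 (y2 s t) by apply: ((hV _).1.2.1 t); lia.
exact (meas2 (fun a b => a + b) (meas2 (fun a b => a *: b) m1 m3)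
   (meas2 (fun a b => a *: b) (meas2 (fun a b => a - b) m2 m1) m4)).
Qed.

Lemma Ydef_strategy (chi : nat -> Omega -> R) : mixed T F chi -> strategy T F (Ydef chi).
Proof.
move=> hm; split; last by move=> t w tT; rewrite /Ydef leqNgt tT.
move=> t tT1; case: (leqP t T) => tT.
  apply: (meas_ext (x := fun w => lam chi t w *: zz t w + \sum_(s < t) Ef chi s t w)).
    by move=> w; rewrite /Ydef tT.
  apply: (meas2 (fun a b => a + b)).
    exact (meas2 (fun a b => a *: b) (meas_lam hm tT1) (zz_inv tT).1).
  by apply: (meas_sum (f := fun (s : 'I_t) => Ef chi s t)) => s; apply: meas_Ef.
by apply: (meas_ext (x := fun _ => 0)) => // w; rewrite /Ydef leqNgt tT.
Qed.

Lemma KE (chi : nat -> Omega -> R) s t w : mixed T F chi -> (s < t)%N -> (t <= T)%N ->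
  Kcone pi t w (Ef chi s t w - Ef chi s t.+1 w).
Proof.
move=> hm st tT; rewrite /Ef lin2.
have sT : (s <= T)%N by lia.
apply: KconeD; apply: KconeZ.
- by case/andP: (hm.2.1 s w).
- by apply: (((hU sT).1.2.2.2.2 t _).2 w); lia.
- by apply: coef_ge0.
- by apply: (((hV (_ : (s < T)%N)).1.2.2.2.2 t _).2 w); lia.
Qed.

Lemma Ydef_K (chi : nat -> Omega -> R) t : mixed T F chi -> (t <= T)%N ->
  inK F pi t (fun w => Ydef chi t w - chi t w *: xi t w - Ydef chi t.+1 w).
Proof.
move=> hm tT; have [hs0 hs1] := Ydef_strategy hm.
split.
  have m1 : meas F t (Ydef chi t) by apply: (meas_mono hF (leq_pred t) tT (hs0 t _)); lia.
  have m2 : meas F t (Ydef chi t.+1) by apply: (hs0 t.+1); lia.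
  exact (meas2 (fun a b => a - b) (meas2 (fun a b => a - b) m1 (meas2 (fun a b => a *: b) (hm.1 t tT) (hxi tT))) m2).
move=> w.
have c0 : 0 <= chi t w by case/andP: (hm.2.1 t w).
have hsum : Kcone pi t w (\sum_(s < t) (Ef chi s t w - Ef chi s t.+1 w)).
  by apply: (Kcone_sum (f := fun s => Ef chi s t w - Ef chi s t.+1 w)) => s st; apply: KE.
have [hq1 e1] := hU tT.
have K1 : Kcone pi t w (q1 t w - y1 t t.+1 w) by apply: (hq1.2.2.2.1.2 w).
case: (boolP (t < T)%N) => tlt; last first.
  have teq : t = T by move/negP: tlt => tlt; lia.
  subst t.
  have eY : Ydef chi T.+1 w = 0 by rewrite /Ydef ltnn.
  have ey : y1 T T.+1 w = 0 by apply: hq1.2.2.1.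
  have eS : \sum_(s < T) (Ef chi s T w - Ef chi s T.+1 w) = \sum_(s < T) Ef chi s T w.
    apply: eq_bigr => s _.
    have sT : (s < T)%N by [].
    rewrite /Ef ((hU (ltnW sT)).1.2.2.1 w) ((hV sT).1.2.2.1 w) !scaler0 addr0 subr0.
    by [].
  rewrite eS in hsum; rewrite ey subr0 in K1.
  rewrite eY subr0 /Ydef leqnn (lamT _ hm) (e1 w).
  have -> : chi T w *: (xi T w + q1 T w) + \sum_(s < T) Ef chi s T w - chi T w *: xi T w =
     chi T w *: q1 T w + \sum_(s < T) Ef chi s T w.
    by apply/rowP => i; rewrite !mxE; ring.
  by apply: KconeD => //; apply: KconeZ.
have [hq2 e2] := hV tlt.
have K2 : Kcone pi t w (q2 t w - y2 t t.+1 w) by apply: (hq2.2.2.2.1.2 w).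
have c2 := coef_ge0 w hm tT.
rewrite /Ydef tT tlt lam_succ big_ord_recr /=.
set S1 := \sum_(s < t) Ef chi s t w.
set S2 := \sum_(i < t) Ef chi (widen_ord (leqnSn t) i) t.+1 w.
have eS : \sum_(s < t) (Ef chi s t w - Ef chi s t.+1 w) = S1 - S2 by rewrite sumrB.
rewrite eS in hsum.
have eq1 : q1 t w = zz t w - xi t w by rewrite (e1 w) addrC addKr.
have eq2 : q2 t w = zz t w - zz t.+1 w by rewrite (e2 w) addrC addKr.
rewrite eq1 in K1; rewrite eq2 in K2.
have -> : lam chi t w *: zz t w + S1 - chi t w *: xi t w -
    ((lam chi t w - chi t w) *: zz t.+1 w + (S2 + Ef chi t t.+1 w)) =
    chi t w *: (zz t w - xi t w - y1 t t.+1 w) +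
    (lam chi t w - chi t w) *: (zz t w - zz t.+1 w - y2 t t.+1 w) + (S1 - S2).
  rewrite /Ef; apply/rowP => i; rewrite !mxE; ring.
by apply: KconeD => //; apply: KconeD; apply: KconeZ.
Qed.

Lemma lam_na (chi chi' : nat -> Omega -> R) t w :
  (forall s, (s < t)%N -> chi s w = chi' s w) -> lam chi t w = lam chi' t w.
Proof. by move=> h; rewrite /lam; congr (_ - _); apply: eq_bigr => s _; apply: h. Qed.

Lemma Ydef_na (chi chi' : nat -> Omega -> R) t w :
  (forall s, (s < t)%N -> chi s w = chi' s w) -> Ydef chi t w = Ydef chi' t w.
Proof.
move=> h; rewrite /Ydef; case: ifP => // _; rewrite (lam_na h); congr (_ + _).
apply: eq_bigr => s _; rewrite /Ef (h s (ltn_ord s)) (@lam_na chi chi' s w) //.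
by move=> u us; apply: h; apply: ltn_trans us (ltn_ord s).
Qed.

Lemma Zad0_PhiAg : exists Y, PhiAg T F pi xi Y /\ Yzero T F Y x.
Proof.
exists Ydef; split.
  split; first by move=> chi hm; split; [apply: Ydef_strategy | move=> t tT; apply: Ydef_K].
  by move=> chi chi' _ _ t w h; apply: Ydef_na.
move=> chi hm w; rewrite /Ydef leq0n /lam big_ord0 big_ord0 subr0 scale1r addr0.
by [].
Qed.

End Part1c.

End MI2.
Import MI2.

Module MJ.
Set Implicit Arguments. Unset Strict Implicit. Unset Printing Implicit Defensive.
Local Open Scope classical_set_scope.
Local Open Scope ring_scope.

Section Final.
Variables (R : realType) (d : nat) (Omega : finType) (T : nat)
  (F : nat -> {set {set Omega}}) (pi : nat -> Omega -> 'I_d -> 'I_d -> R)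
  (xi : nat -> Omega -> 'rV[R]_d).
Hypothesis hF : filtration T F.
Hypothesis hpi : exchange_rates T F pi.
Hypothesis hxi : adapted_option T F xi.
Notation vec := 'rV[R]_d.

Lemma Kcone_bigsum t w (I : finType) (f : I -> vec) :
  (forall i, Kcone pi t w (f i)) -> Kcone pi t w (\sum_i f i).
Proof.
move=> h; apply: (big_ind (Kcone pi t w)); first exact: Kcone0.
  by move=> a b; apply: KconeD.
by move=> i _; apply: h.
Qed.

Lemma Kcone_e t w k : Kcone pi t w (e k).
Proof.
exists (fun k' => (k' == k)%:R), (fun _ _ => 0); split.
  by move=> k'; case: (_ == _).
split=> //.
rewrite (bigD1 k) //= eqxx scale1r big1 ?addr0.
  by rewrite big1 ?addr0 // => j _; rewrite big1 // => k' _; rewrite scale0r.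
by move=> k' /negbTE ->; rewrite scale0r.
Qed.

Lemma Kcone_g t w j k : Kcone pi t w (pi t w j k *: e j - e k).
Proof.
exists (fun _ => 0), (fun j' k' => ((j' == j) && (k' == k))%:R); split=> //.
split; first by move=> j' k'; case: (_ && _).
rewrite big1 ?add0r; last by move=> k' _; rewrite scale0r.
rewrite (bigD1 j) //= (bigD1 k) //= !eqxx scale1r big1 ?addr0.
  rewrite big1 ?addr0 // => j' /negbTE hj; rewrite big1 // => k' _.
  by rewrite hj scale0r.
by move=> k' /negbTE hk; rewrite hk scale0r.
Qed.

Definition posp (r : R) := if 0 <= r then r else 0.
Definition negp (r : R) := if 0 <= r then 0 else - r.

Lemma posp_negp r : posp r - negp r = r.
Proof. by rewrite /posp /negp; case: ifP => _; rewrite ?subr0 ?sub0r ?opprK. Qed.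

Lemma posp_ge0 r : 0 <= posp r.
Proof. by rewrite /posp; case: ifP. Qed.

Lemma negp_ge0 r : 0 <= negp r.
Proof. by rewrite /negp; case: ifP => // /negbT; rewrite -ltNge oppr_ge0 => /ltW. Qed.

Lemma posp_le r : posp r <= `|r|.
Proof. by rewrite /posp; case: ifP => _; rewrite ?normr_ge0 ?ler_norm. Qed.

Lemma Kbig t w (j : 'I_d) (u : vec) (M : R) : (t <= T)%N ->
  \sum_k `|u 0 k| * pi t w j k <= M -> Kcone pi t w (M *: e j - u).
Proof.
move=> tT hM.
have pi0 : forall k, 0 <= pi t w j k by move=> k; apply: ltW; apply: ((hpi tT).2.1).
pose P := \sum_k posp (u 0 k) * pi t w j k.
have PM : P <= M.
  apply: le_trans hM; apply: ler_sum => k _; apply: ler_wpM2r => //.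
  exact: posp_le.
have eu : u = \sum_k (posp (u 0 k) - negp (u 0 k)) *: e k.
  by rewrite {1}(row_sum_delta u); apply: eq_bigr => k _; rewrite posp_negp.
pose A := \sum_k posp (u 0 k) *: e k.
pose B := \sum_k negp (u 0 k) *: e k.
have eg : \sum_k posp (u 0 k) *: (pi t w j k *: e j - e k) = P *: e j - A.
  rewrite /P /A scaler_suml -sumrB; apply: eq_bigr => k _.
  by rewrite scalerBr scalerA.
have eu' : u = A - B by rewrite eu /A /B -sumrB; apply: eq_bigr => k _; rewrite scalerBl.
have -> : M *: e j - u = B + ((M - P) *: e j + \sum_k posp (u 0 k) *: (pi t w j k *: e j - e k)).
  rewrite eg eu'; apply/rowP => i; rewrite !mxE; ring.
apply: KconeD.
  by apply: Kcone_bigsum => k; apply: KconeZ; [apply: negp_ge0 | apply: Kcone_e].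
apply: KconeD; first by apply: KconeZ; [rewrite subr_ge0 | apply: Kcone_e].
by apply: Kcone_bigsum => k; apply: KconeZ; [apply: posp_ge0 | apply: Kcone_g].
Qed.

Lemma omega_ne : exists w : Omega, True.
Proof.
have /and3P[/eqP cov _ n0] := hF.1 0%N (leq0n T).
move: n0; rewrite hF.2.1 inE => /eqP ne.
case: (pickP (fun w : Omega => true)) => [w _|h]; first by exists w.
exfalso; apply: ne; apply/setP => w; by rewrite !inE h.
Qed.

Definition Mt (j : 'I_d) t := \sum_(w : Omega) \sum_k `|xi t w 0 k| * pi t w j k.
Definition M1 (j : 'I_d) := \sum_(t < T.+1) Mt j t.

Lemma term_ge0 j t w k : (t <= T)%N -> 0 <= `|xi t w 0 k| * pi t w j k.
Proof. by move=> tT; apply: mulr_ge0 => //; apply: ltW; apply: ((hpi tT).2.1). Qed.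

Lemma Mt_ge0 j t : (t <= T)%N -> 0 <= Mt j t.
Proof. by move=> tT; apply: sumr_ge0 => w _; apply: sumr_ge0 => k _; apply: term_ge0. Qed.

Lemma le_Mt j t w : (t <= T)%N -> \sum_k `|xi t w 0 k| * pi t w j k <= Mt j t.
Proof.
move=> tT; rewrite /Mt (bigD1 w) //= lerDl.
by apply: sumr_ge0 => w' _; apply: sumr_ge0 => k _; apply: term_ge0.
Qed.

Lemma le_M1 j t w : (t <= T)%N -> \sum_k `|xi t w 0 k| * pi t w j k <= M1 j.
Proof.
move=> tT; apply: (le_trans (le_Mt j w tT)).
have h : (t < T.+1)%N by rewrite ltnS.
rewrite /M1 (bigD1 (Ordinal h)) //= lerDl.
by apply: sumr_ge0 => i _; apply: Mt_ge0; rewrite -ltnS.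
Qed.

Lemma Zrec_big j n w : Zrec T F pi xi n w (M1 j *: e j).
Proof.
elim: n w => [|n IH] w /=.
  exists (M1 j *: e j - xi T w); last by rewrite addrC subrK.
  by apply/Qnode_T => //; apply: Kbig => //; apply: le_M1.
have tT : (T - n.+1 <= T)%N by apply: leq_subr.
set t := (T - n.+1)%N in tT *.
split.
  exists (M1 j *: e j - xi t w); last by rewrite addrC subrK.
  exists (fun w' => M1 j *: e j - xi t w'); split => //.
  apply/inQ_QP; exists (fun _ _ => 0); split.
    exact (meas1 (fun a => M1 j *: e j - a) (hxi tT)).
  split; first by [].
  split; first by [].
  split.
    split; first exact (meas1 (fun a => M1 j *: e j - a - 0) (hxi tT)).
    by move=> w'; rewrite subr0; apply: Kbig => //; apply: le_M1.
  by move=> s _; apply: (inK_ext _ (inK0 F pi s)) => w'; rewrite subr0.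
exists (M1 j *: e j); first by move=> w' _; apply: IH.
exists 0; last by rewrite addr0.
exists (fun=> 0); split => //.
apply/inQ_QP; exists (fun _ _ => 0); split; first by [].
split; first by [].
split; first by [].
split; first by apply: (inK_ext _ (inK0 F pi t)) => w'; rewrite subr0.
by move=> s _; apply: (inK_ext _ (inK0 F pi s)) => w'; rewrite subr0.
Qed.

Lemma Zad0_big j : Zad0 T F pi xi (M1 j *: e j).
Proof. by move=> w; apply: Zrec_big. Qed.

Hypothesis hNA : no_arbitrage T F pi.

Lemma lower_bound j (x : R) : Zad0 T F pi xi (x *: e j) -> - Mt j T <= x.
Proof.
move=> hz; rewrite leNgt; apply/negP => hlt.
have [Y [hY hY0]] := Zad0_PhiAg hF hxi hz.
have st : stopt T F (fun _ : Omega => T) by apply: stopt_const.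
pose chi := chiOf R (fun _ : Omega => T).
have hm : mixed T F chi := mixed_chi R hF st.
have [[hs1 hs2] hk] := hY.1 chi hm.
pose y t w := if (t <= T)%N then Y chi t w - x *: e j else 0.
apply: hNA; exists y; split.
  split; last by move=> t w tT; rewrite /y leqNgt tT.
  move=> t tT1; case: (leqP t T) => tT.
    apply: (meas_ext (x := fun w => Y chi t w - x *: e j)); first by move=> w; rewrite /y tT.
    exact (meas1 (fun a => a - x *: e j) (hs1 t tT1)).
  by apply: (meas_ext (x := fun _ => 0)) => // w; rewrite /y leqNgt tT.
split; first by move=> w; rewrite /y leq0n (hY0 chi hm) subrr.
split.
  move=> t tT; apply: (inK_ext _ (hk t (ltnW tT))) => w.
  rewrite /y (ltnW tT) tT /chi /chiOf.
  have -> : (T == t) = false by apply/negbTE; rewrite neq_ltn tT orbT.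
  by rewrite scale0r subr0 opprB addrA subrK.
exists (fun _ => (- x - Mt j T) *: e j); split; first by [].
have pos : 0 < - x - Mt j T by rewrite subr_gt0 ltrNr.
split; first by move=> w k; rewrite /e !mxE; apply: mulr_ge0; [apply: ltW | case: (_ && _)].
split.
  have [w _] := omega_ne; exists w; apply/negP => /eqP /rowP /(_ j).
  rewrite /e !mxE !eqxx /= mulr1 => h; by move: pos; rewrite h ltxx.
split.
  apply: (meas2 (fun a b => a - b)); last by [].
  by apply: (meas_ext (x := fun w => Y chi T w - x *: e j)) => [w|]; [rewrite /y leqnn | exact (meas1 (fun a => a - x *: e j) (meas_mono hF (leq_pred T) (leqnn T) (hs1 T (leqnSn T))))].
move=> w.
have k1 := (hk T (leqnn T)).2 w.
rewrite /chi /chiOf eqxx scale1r (hs2 T.+1 w (ltnSn T)) subr0 in k1.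
have k2 : Kcone pi T w (Mt j T *: e j - - xi T w).
  apply: Kbig => //; apply: le_trans (le_Mt j w (leqnn T)).
  by apply: ler_sum => k _; rewrite mxE normrN.
rewrite /y leqnn.
have -> : Y chi T w - x *: e j - (- x - Mt j T) *: e j =
    (Y chi T w - xi T w) + (Mt j T *: e j - - xi T w).
  by apply/rowP => i; rewrite !mxE; ring.
exact: KconeD.
Qed.

End Final.

End MJ.
Import MJ.

Unset Implicit Arguments.
Local Open Scope classical_set_scope.
Local Open Scope ring_scope.

Theorem theorem4p6 (R : realType) (d : nat) (Omega : finType) (T : nat)
  (F : nat -> {set {set Omega}}) (pi : nat -> Omega -> 'I_d -> 'I_d -> R)
  (xi : nat -> Omega -> 'rV[R]_d)
  (hF : filtration T F) (hpi : exchange_rates T F pi)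
  (hxi : adapted_option T F xi) (hNA : no_arbitrage T F pi) :
  Zad0 T F pi xi = [set x | exists Y, PhiAg T F pi xi Y /\ Yzero T F Y x] /\
  forall j : 'I_d,
    (Zad0 T F pi xi (askprice T F pi xi j *: e j) /\
     (forall x : R, Zad0 T F pi xi (x *: e j) -> askprice T F pi xi j <= x)) /\
    exists Y, PhiAg T F pi xi Y /\ Yzero T F Y (askprice T F pi xi j *: e j).
Proof.
have P1 : forall v, Zad0 T F pi xi v <-> exists Y, PhiAg T F pi xi Y /\ Yzero T F Y v.
  move=> v; split; first exact: (Zad0_PhiAg hF hxi).
  by case=> Y [hY h0]; exact: (PhiAg_Zad0 hF hpi hxi hY h0).
split; first by apply/seteqP; split=> v /= /P1.
move=> j.
have cp := CV_line j (CV_Zad0 hF hpi xi).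
have ph := cpoly_polyh cp.
have [z [hz hmin]] : exists z : unit -> R, Zad0 T F pi xi (z tt *: e j) /\
    forall z' : unit -> R, Zad0 T F pi xi (z' tt *: e j) -> z tt <= z' tt.
  apply: (polyh_min ph).
    by exists (fun _ => M1 T pi xi j); apply: (Zad0_big hF hpi hxi).
  exists (- Mt pi xi j T) => z' hz'; exact: (lower_bound hF hpi hxi hNA hz').
pose S := [set x : R | exists Y, PhiAg T F pi xi Y /\ Yzero T F Y (x *: e j)].
have Sm : S (z tt) by apply/P1.
have lbm : lbound S (z tt).
  move=> x /P1 hx; exact: (hmin (fun _ => x) hx).
have ask : askprice T F pi xi j = z tt.
  apply/eqP; rewrite eq_le; apply/andP; split.
    by apply: (ge_inf (E := S)); [exists (z tt) | ].
  by apply: lb_le_inf; [exists (z tt) | ].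
rewrite ask; split; first split=> //.
  move=> x hx; exact: (hmin (fun _ => x) hx).
exact/P1.
Qed.
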